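(* Let $\mathcal N$ be a monotonic max-sum $(\mathrm{Col},\delta)$-GNN with $L$ layers, dimensions $\delta_0,\dots,\delta_L$ and capacity $C_{\mathcal N}$, and let $\delta_{\mathcal N}=\max(\delta_0,\dots,\delta_L)$. Let $\Pi_{\mathcal N}$ be the Datalog program containing, up to variable renaming, every $(L,\,|\mathrm{Col}|\cdot\delta_{\mathcal N}\cdot C_{\mathcal N})$-tree-like rule (over the $(\mathrm{Col},\delta)$-signature) that is captured by $\mathcal N$. Then $\mathcal N$ and $\Pi_{\mathcal N}$ are equivalent, i.e. $T_{\mathcal N}(D)=T_{\Pi_{\mathcal N}}(D)$ for every $(\mathrm{Col},\delta)$-dataset $D$.
   Context: Datalog. Fix disjoint countably infinite sets of predicates (each with an arity), constants and variables. A term is a constant or a variable; an atom is $P(t_1,\dots,t_n)$ with $P$ of arity $n$; an inequality is $t_1\neq t_2$; a literal is an atom or an inequality; a fact is a variable-free atom; a dataset is a finite set of facts. A rule has the form $B_1\wedge\dots\wedge B_n\to H$ with $n\ge0$, literals $B_i$ and an atom $H$ (no safety condition; the empty body is written $\top$). A substitution maps finitely many variables to variable-free terms. For a rule $r$ and dataset $D$, $T_r(D)$ is the set of facts $H\nu$ for each substitution $\nu$ mapping all variables of $r$ to terms occurring in $D$ such that $B_i\nu\in D$ for each body atom and $s\neq t$ for each instantiated body inequality $s\neq t$. For a program (finite set of rules) $\Pi$, $T_\Pi(D)=\bigcup_{r\in\Pi}T_r(D)$. Two rules are equal up to variable renaming if a bijection between their variable sets maps one onto the other with exactly the same conjuncts.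 Graphs and GNNs. For a finite set of colours $\mathrm{Col}$ and $\delta\in\mathbb N$, a $(\mathrm{Col},\delta)$-graph is $G=\langle V,\{E^c\}_{c\in\mathrm{Col}},\lambda\rangle$ where $V$ is a finite vertex set, $E^c\subseteq V\times V$, and $\lambda$ assigns each vertex a vector in $\mathbb R^\delta$; it is Boolean if all feature entries are in $\{0,1\}$. A $(\mathrm{Col},\delta)$-GNN $\mathcal N$ with $L\ge 1$ layers consists of dimensions $\delta_0=\delta,\delta_1,\dots,\delta_{L-1},\delta_L=\delta$; real matrices $A_\ell$, $B_\ell^c$ of size $\delta_\ell\times\delta_{\ell-1}$ and bias vectors $b_\ell\in\mathbb R^{\delta_\ell}$ ($1\le\ell\le L$, $c\in\mathrm{Col}$); aggregation functions $\mathrm{agg}_\ell$ from finite real multisets to $\mathbb R$ (applied componentwise); an activation $\sigma:\mathbb R\to\mathbb R$ and a classification function $\mathrm{cls}:\mathbb R\to\{0,1\}$ (both componentwise). Applying $\mathcal N$ to $G$ yields labellings $\lambda_0=\lambda,\dots,\lambda_L$ with $\mathbf v_\ell=\sigma\big(A_\ell\mathbf v_{\ell-1}+\sum_{c}B_\ell^c\,\mathrm{agg}_\ell(\{\!\{\mathbf u_{\ell-1}\mid (v,u)\in E^c\}\!\})+b_\ell\big)$; $\mathcal N(G)$ has the same vertices and edges with each $v$ labelled $\mathrm{cls}(\mathbf v_L)$. Canonical transformation. The $(\mathrm{Col},\delta)$-signature consists of binary predicates $E^c$ ($c\in\mathrm{Col}$) and unary predicates $U_1,\dots,U_\delta$;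 a $(\mathrm{Col},\delta)$-dataset is a dataset over this signature. Its canonical encoding $\mathrm{enc}(D)$ has a vertex $v_t$ per term $t$ occurring in $D$, edges $(v_t,v_s)\in E^c$ iff $E^c(t,s)\in D$, and $i$-th feature of $v_t$ equal to $1$ iff $U_i(t)\in D$ (else $0$). The canonical decoding of a Boolean graph contains $E^c(t,s)$ for each edge $(v_t,v_s)\in E^c$ and $U_i(t)$ for each vertex $v_t$ with $i$-th feature $1$. $T_{\mathcal N}(D)=\mathrm{dec}(\mathcal N(\mathrm{enc}(D)))$. $\mathcal N$ captures a rule or program $\alpha$ if $T_\alpha(D)\subseteq T_{\mathcal N}(D)$ for every $(\mathrm{Col},\delta)$-dataset $D$; they are equivalent if $T_\alpha(D)=T_{\mathcal N}(D)$ for all such $D$. Max-sum aggregation and monotonic max-sum GNNs. For $k\in\mathbb N_0\cup\{\infty\}$ and finite real multiset $S$, with $m=\min(k,|S|)$, $\mathrm{maxsum}_k(S)$ is $0$ if $m=0$ and otherwise the sum of the $m$ largest elements of $S$ counted with multiplicity. A monotonic max-sum GNN is a $(\mathrm{Col},\delta)$-GNN with all entries of all $A_\ell,B_\ell^c$ nonnegative, each $\mathrm{agg}_\ell=\mathrm{maxsum}_{k_\ell}$ for some $k_\ell\in\mathbb N_0\cup\{\infty\}$, $\sigma$ monotonically increasing, unbounded and with range $\mathbb R_{\ge0}$, and $\mathrm{cls}$ a step function with some threshold $t$ ($\mathrm{cls}(t')=0$ for $t'<t$, $=1$ for $t'\ge t$). Sets $X_\ell^i$. A $(\mathrm{Col},\ell)$-multiset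 family $\mathcal Y$ assigns to each colour $c$ a finite multiset $\mathcal Y^c$ of vectors of dimension $\delta_\ell$. Let $\mathrm{Val}_\ell^i(\mathbf x,\mathcal Y)$ be the $i$-th component of $A_\ell\mathbf x+\sum_cB_\ell^c\,\mathrm{maxsum}_{k_\ell}(\mathcal Y^c)+b_\ell$. Let $X_0^i=\{0,1\}$, and for $\ell\ge1$ let $X_\ell^i$ be the set of all $\sigma(\mathrm{Val}_\ell^i(\mathbf x,\mathcal Y))$ over vectors $\mathbf x$ of dimension $\delta_{\ell-1}$ with $x_j\in X_{\ell-1}^j$ for all $j$ and $(\mathrm{Col},\ell-1)$-multiset families $\mathcal Y$ with $y_j\in X_{\ell-1}^j$ for all $c$, $\mathbf y\in\mathcal Y^c$, $j$. Capacities. Let $\alpha_L$ be the threshold of $\mathrm{cls}$. For $\ell=L,L-1,\dots,1$: let $w_\ell$ be the least nonzero entry among all entries of $A_\ell$ and all $B_\ell^c$, and $x_\ell$ the least nonzero number in $\bigcup_iX_{\ell-1}^i$. If either does not exist, set $C_\ell=\dots=C_1=0$ and stop. Otherwise let $\beta_\ell$ be the least natural number with $\sigma(\beta_\ell)\ge\alpha_\ell$, $b_\ell^{\min}$ the least entry of $b_\ell$, $C_\ell=\min(k_\ell,\lceil(\beta_\ell-b_\ell^{\min})/(w_\ell x_\ell)\rceil)$, $\alpha_{\ell-1}=(\beta_\ell-b_\ell^{\min})/w_\ell$. The capacity is $C_{\mathcal N}=\max(C_1,\dots,C_L)$. Tree-like formulas. Defined inductively: for any variable $x$, $\top$ is tree-like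 for $x$; for any unary predicate $U$, $U(x)$ is tree-like for $x$; if $\varphi_1,\varphi_2$ are tree-like for $x$ and share no variable other than $x$, then $\varphi_1\wedge\varphi_2$ is tree-like for $x$; if $E^c$ is a binary predicate and $\varphi_1,\dots,\varphi_n$ are tree-like for pairwise distinct variables $y_1,\dots,y_n$ respectively, none containing $x$ and pairwise sharing no variable, then $\bigwedge_{i=1}^n(E^c(x,y_i)\wedge\varphi_i)\wedge\bigwedge_{1\le i<j\le n}y_i\neq y_j$ is tree-like for $x$. In a tree-like formula $\varphi$, the fan-out of a variable $x$ is the number of distinct variables $y$ with $E^c(x,y)$ a conjunct of $\varphi$ for some $c$; the depth of $x$ is the maximal $n$ such that there are variables $x_0,\dots,x_n=x$ and colours with $E^{c_i}(x_{i-1},x_i)$ a conjunct for $1\le i\le n$; the depth of $\varphi$ is the maximal depth of its variables. For natural numbers $d,f$, $\varphi$ is $(d,f)$-tree-like if every variable of depth $i$ has $i\le d$ and fan-out at most $f\cdot(d-i)$. A rule is $(d,f)$-tree-like if it has the form $\varphi\to U(x)$ with $U$ unary and $\varphi$ a $(d,f)$-tree-like formula for $x$.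
   Formalization: $T_{\mathcal N}(D)$ and $T_{\Pi_{\mathcal N}}(D)$ agree on unary facts, the binary facts of $T_{\mathcal N}(D)$ being exactly those of D; σ need only be non-decreasing, and a negative ceiling in $C_\ell$ is replaced by 0. Each condition added here is assumed in the paper as well or is needed for the statement above to hold. *)

(* Defs.v *)
From HB Require Import structures.
From mathcomp Require Import all_boot all_order all_algebra.
From mathcomp Require Import reals.
From Stdlib Require Import ClassicalEpsilon.

Set Implicit Arguments.
Unset Strict Implicit.
Unset Printing Implicit Defensive.

Import Order.TTheory GRing.Theory Num.Theory.
Local Open Scope ring_scope.

(* Constants and variables are both encoded by [nat] (disjoint via the      *)
(* [term] constructors).  Unary predicates U_1..U_delta are indexed by      *)
(* 'I_delta (U_{i+1} is [i]), binary predicates E^c by c : Col.             *)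

Section Syntax.
Variables (Col : finType) (delta : nat).

Inductive fact : Type :=
  | FE of Col & nat & nat
  | FU of 'I_delta & nat.

Definition fact_code (f : fact) : (Col * nat * nat) + ('I_delta * nat) :=
  match f with FE c a b => inl (c, a, b) | FU i a => inr (i, a) end.
Definition fact_decode (s : (Col * nat * nat) + ('I_delta * nat)) : fact :=
  match s with inl (c, a, b) => FE c a b | inr (i, a) => FU i a end.
Lemma fact_codeK : cancel fact_code fact_decode.
Proof. by case. Qed.
HB.instance Definition _ := Countable.copy fact (can_type fact_codeK).

(* a (Col,delta)-dataset: a finite set of facts, given by a list *)
Definition dataset := seq fact.

Definition fact_terms (f : fact) : seq nat :=
  match f with FE _ a b => [:: a; b] | FU _ a => [:: a] end.

Definition terms (D : dataset) : seq nat := undup (flatten (map fact_terms D)).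

Inductive term : Type := Const of nat | Var of nat.

Inductive atom : Type :=
  | AE of Col & term & term
  | AU of 'I_delta & term.

Inductive literal : Type :=
  | LAtom of atom
  | LNeq of term & term.

(* a rule  B_1 /\ ... /\ B_n -> H ; the empty body is "top" *)
Record rule : Type := Rule { body : seq literal; head : atom }.

Definition term_vars (t : term) : seq nat :=
  match t with Var v => [:: v] | Const _ => [::] end.
Definition atom_vars (a : atom) : seq nat :=
  match a with AE _ s t => term_vars s ++ term_vars t | AU _ t => term_vars t end.
Definition lit_vars (l : literal) : seq nat :=
  match l with LAtom a => atom_vars a | LNeq s t => term_vars s ++ term_vars t end.
Definition vars (phi : seq literal) : seq nat := flatten (map lit_vars phi).
Definition rule_vars (r : rule) : seq nat := vars (body r) ++ atom_vars (head r).

(* substitution nu (on all variables; only its values on vars r matter) *)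
Definition inst (nu : nat -> nat) (t : term) : nat :=
  match t with Const a => a | Var v => nu v end.
Definition inst_atom (nu : nat -> nat) (a : atom) : fact :=
  match a with
  | AE c s t => FE c (inst nu s) (inst nu t)
  | AU i t => FU i (inst nu t)
  end.
Definition lit_sat (D : dataset) (nu : nat -> nat) (l : literal) : Prop :=
  match l with
  | LAtom a => inst_atom nu a \in D
  | LNeq s t => inst nu s <> inst nu t
  end.

Definition T_rule (r : rule) (D : dataset) (f : fact) : Prop :=
  exists nu : nat -> nat,
    (forall v, v \in rule_vars r -> nu v \in terms D) /\
    (forall l, List.In l (body r) -> lit_sat D nu l) /\
    f = inst_atom nu (head r).

Fixpoint neq_pairs (ys : seq nat) : seq literal :=
  match ys with
  | [::] => [::]
  | y :: ys' => [seq LNeq (Var y) (Var z) | z <- ys'] ++ neq_pairs ys'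
  end.

(* /\_i (E^c(x,y_i) /\ phi_i) /\ /\_{i<j} y_i <> y_j ,  ch = [(y_i, phi_i)] *)
Definition edge_group (x : nat) (c : Col) (ch : seq (nat * seq literal)) :
    seq literal :=
  flatten [seq LAtom (AE c (Var x) (Var yp.1)) :: yp.2 | yp <- ch]
  ++ neq_pairs (map fst ch).

Inductive treelike : nat -> seq literal -> Prop :=
  | TL_top x : treelike x [::]
  | TL_unary x i : treelike x [:: LAtom (AU i (Var x))]
  | TL_and x p1 p2 :
      treelike x p1 -> treelike x p2 ->
      (forall v, v \in vars p1 -> v \in vars p2 -> v = x) ->
      treelike x (p1 ++ p2)
  | TL_edges x c (ch : seq (nat * seq literal)) :
      uniq (map fst ch) ->
      (forall yp, List.In yp ch -> treelike yp.1 yp.2) ->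
      (forall yp, List.In yp ch -> x \notin yp.1 :: vars yp.2) ->
      (forall i j, (i < j < size ch)%N ->
         forall v, v \in (nth (0%N, [::]) ch i).1 :: vars (nth (0%N, [::]) ch i).2 ->
                   v \notin (nth (0%N, [::]) ch j).1 :: vars (nth (0%N, [::]) ch j).2) ->
      treelike x (edge_group x c ch).

Definition succs (z : nat) (l : literal) : seq nat :=
  match l with
  | LAtom (AE _ (Var a) (Var b)) => if a == z then [:: b] else [::]
  | _ => [::]
  end.
Definition fanout (phi : seq literal) (z : nat) : nat :=
  size (undup (flatten (map (succs z) phi))).

Inductive chain (phi : seq literal) : nat -> nat -> Prop :=
  | chain0 z : chain phi z 0
  | chainS z w n c :
      chain phi w n -> List.In (LAtom (AE c (Var w) (Var z))) phi ->
      chain phi z n.+1.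

(* (d,f)-tree-like: every variable of depth i has i <= d and fan-out at most
   f*(d-i).  The depth of z is the maximal n with [chain phi z n]; since the
   bound f*(d-i) is antitone in i, quantifying over all chain lengths is the
   same as using the maximal one. *)
Definition dftreelike (d f : nat) (x : nat) (phi : seq literal) : Prop :=
  treelike x phi /\
  forall z n, chain phi z n -> (n <= d)%N /\ (fanout phi z <= f * (d - n))%N.

Definition dftreelike_rule (d f : nat) (r : rule) : Prop :=
  exists x i, head r = AU i (Var x) /\ dftreelike d f x (body r).

End Syntax.

Section GNN.
Variables (R : realType) (Col : finType).

(* maxsum_k(S), k = None standing for infinity *)
Definition maxsum (k : option nat) (S : seq R) : R :=
  match k with
  | None => \sum_(x <- S) x
  | Some k => \sum_(x <- take k (sort (fun x y => y <= x) S)) x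
  end.

(* Vectors of dimension n are functions nat -> R (only the
   components < n matter); layer l (1 <= l <= L) has matrices
   A l, B l c : delta_l x delta_{l-1} (entries (A l i j)), bias b l,
   aggregation maxsum_(k l); activation sigma; cls = step at threshold t. *)
Record mgnn : Type := MGNN {
  nL : nat;
  dim : nat -> nat;
  mA : nat -> nat -> nat -> R;
  mB : nat -> Col -> nat -> nat -> R;
  bias : nat -> nat -> R;
  kagg : nat -> option nat;
  sigma : R -> R;
  thr : R
}.

Variable N : mgnn.

Definition Val (l i : nat) (x : nat -> R) (Y : Col -> seq (nat -> R)) : R :=
  \sum_(j < dim N l.-1) mA N l i j * x j
  + \sum_(c : Col) \sum_(j < dim N l.-1)
        mB N l c i j * maxsum (kagg N l) [seq y (nat_of_ord j) | y <- Y c]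
  + bias N l i.

Definition cls (r : R) : bool := thr N <= r.

Definition monotonic_maxsum (delta : nat) : Prop :=
  [/\ (1 <= nL N)%N, dim N 0 = delta & dim N (nL N) = delta] /\
  (forall l i j, (1 <= l <= nL N)%N -> (i < dim N l)%N -> (j < dim N l.-1)%N ->
     0 <= mA N l i j /\ forall c, 0 <= mB N l c i j) /\
  [/\ {homo sigma N : x y / x <= y},
      (forall M : R, exists x, M < sigma N x) &
      (forall y : R, 0 <= y <-> exists x, sigma N x = y)].

(* a (Col,delta)-graph with vertices [gV] (a duplicate-free list of nats) *)
Record graph : Type := Graph {
  gV : seq nat;
  gE : Col -> nat -> nat -> bool;
  glab : nat -> nat -> R
}.

Fixpoint lab (G : graph) (l : nat) : nat -> nat -> R :=
  match l with
  | 0 => glab G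
  | l'.+1 => fun v i =>
      sigma N (Val l'.+1 i (lab G l' v)
                 (fun c => [seq lab G l' u | u <- gV G & gE G c v u]))
  end.

Fixpoint Xset (l : nat) : nat -> R -> Prop :=
  match l with
  | 0 => fun _ r => r = 0 \/ r = 1
  | l'.+1 => fun i r =>
      exists (x : nat -> R) (Y : Col -> seq (nat -> R)),
        (forall j, (j < dim N l')%N -> Xset l' j (x j)) /\
        (forall c y j, List.In y (Y c) -> (j < dim N l')%N -> Xset l' j (y j)) /\
        r = sigma N (Val l'.+1 i x Y)
  end.

Definition opt_least (P : R -> Prop) : option R :=
  match excluded_middle_informative
          (exists m, P m /\ forall r, P r -> m <= r) with
  | left h => Some (proj1_sig (constructive_indefinite_description _ h))
  | right _ => None
  end.

Definition least_nat (P : pred nat) : nat :=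
  match excluded_middle_informative (exists n, P n) with
  | left h => ex_minn h
  | right _ => 0%N
  end.

Definition w_of (l : nat) : option R :=
  opt_least (fun r => r != 0 /\
     exists i j, [/\ (i < dim N l)%N, (j < dim N l.-1)%N &
                     (r = mA N l i j \/ exists c, r = mB N l c i j)]).

Definition x_of (l : nat) : option R :=
  opt_least (fun r => r != 0 /\ exists i, (i < dim N l.-1)%N /\ Xset l.-1 i r).

Definition bmin_of (l : nat) : R :=
  odflt 0 (opt_least (fun r => exists i, (i < dim N l)%N /\ r = bias N l i)).

(* C_l = min(k_l, ceil((beta_l - b_l^min)/(w_l x_l))); a nonpositive ceiling
   is read as 0 *)
Definition C_of (l : nat) (beta : nat) (bmin w x : R) : nat :=
  let z := Num.ceil ((beta%:R - bmin) / (w * x)) in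
  let c := if (0 <= z)%R then `|z|%N else 0%N in
  match kagg N l with None => c | Some k => minn k c end.

(* [caps m alpha] = [:: C_m; C_(m-1); ...] computed from alpha_m = alpha,
   stopping (all remaining C's = 0) when w_l or x_l does not exist *)
Fixpoint caps (m : nat) (alpha : R) : seq nat :=
  match m with
  | 0 => [::]
  | m'.+1 =>
      match w_of m'.+1, x_of m'.+1 with
      | Some w, Some x =>
          let beta := least_nat (fun n => alpha <= sigma N n%:R) in
          let bmin := bmin_of m'.+1 in
          C_of m'.+1 beta bmin w x :: caps m' ((beta%:R - bmin) / w)
      | _, _ => [::]
      end
  end.

Definition capacity : nat := \max_(c <- caps (nL N) (thr N)) c.

Definition delta_N : nat := \max_(l < (nL N).+1) dim N l.

End GNN.

Section Semantics.
Variables (R : realType) (Col : finType) (delta : nat).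

Definition enc (D : dataset Col delta) : graph R Col :=
  Graph (terms D)
        (fun c a b => FE delta c a b \in D)
        (fun a j => match (insub j : option 'I_delta) with
                    | Some i => if FU Col i a \in D then 1 else 0
                    | None => 0
                    end).

Definition T_N (N : mgnn R Col) (D : dataset Col delta) (f : fact Col delta) :
    Prop :=
  match f with
  | FE c a b => FE delta c a b \in D
  | FU i a => a \in terms D /\ cls N (lab N (enc D) (nL N) a i)
  end.

Definition captures (N : mgnn R Col) (r : rule Col delta) : Prop :=
  forall (D : dataset Col delta) f, T_rule r D f -> T_N N D f.

Definition T_PiN (N : mgnn R Col) (D : dataset Col delta) (f : fact Col delta) :
    Prop :=
  exists r : rule Col delta,
    [/\ dftreelike_rule (nL N) (#|Col| * delta_N N * capacity N)%N r,
        captures N r & T_rule r D f].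

Definition is_binary (f : fact Col delta) : bool :=
  if f is FE _ _ _ then true else false.

End Semantics.

(* Main.v *)
Require Import Defs.
From HB Require Import structures.
From mathcomp Require Import all_boot all_order all_algebra.
From mathcomp Require Import reals.
From Stdlib Require Import ClassicalEpsilon Lia.
From mathcomp Require Import zify.
Require Import Defs.
Set Implicit Arguments.
Unset Strict Implicit.
Unset Printing Implicit Defensive.
Import Order.TTheory GRing.Theory Num.Theory.
Local Open Scope ring_scope.


Section MS.
Variable R : realType.
Implicit Types (s t u v w : seq R).

Definition ge_rel := fun x y : R => y <= x.
Definition subm (u s : seq R) := exists v, perm_eq s (u ++ v).
Definition nonneg (s : seq R) := forall x, x \in s -> 0 <= x.
Definition kok (k : option nat) (n : nat) : bool := if k is Some k' then (n <= k')%N else true.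

Lemma sumr_ge0_seq s : nonneg s -> 0 <= \sum_(x <- s) x.
Proof. by move=> H; rewrite big_seq; apply: sumr_ge0 => x /H. Qed.

Lemma subm_nonneg u s : subm u s -> nonneg s -> nonneg u.
Proof.
by case=> v Hp H x xu; apply: H; rewrite (perm_mem Hp) mem_cat xu.
Qed.

Lemma subm_sum u s : subm u s -> nonneg s -> \sum_(x <- u) x <= \sum_(x <- s) x.
Proof.
case=> v Hp H; rewrite (perm_big _ Hp) big_cat /= lerDl.
apply: sumr_ge0_seq => x xv; apply: H; by rewrite (perm_mem Hp) mem_cat xv orbT.
Qed.

Lemma subm_perm u s s' : subm u s -> perm_eq s s' -> subm u s'.
Proof. by case=> v Hp Hp'; exists v; rewrite -(permPl Hp'). Qed.

Lemma subm_cat u s t : subm u s -> subm u (s ++ t).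
Proof. by case=> v Hp; exists (v ++ t); rewrite catA perm_cat2r. Qed.

Lemma top_ge k w u : sorted ge_rel w -> nonneg w -> subm u w -> (size u <= k)%N ->
  \sum_(x <- u) x <= \sum_(x <- take k w) x.
Proof.
elim: w k u => [|a w IH] k u Hs Hn [v Hp] Hk.
  by move: (perm_size Hp); case: u Hk {Hp} => //= _ _; rewrite big_nil.
have Hs' : sorted ge_rel w by apply: (path_sorted Hs).
have Hn' : nonneg w by move=> x xw; apply: Hn; rewrite inE xw orbT.
have Hall : all (ge_rel a) w.
  by apply: order_path_min => // x y z; rewrite /ge_rel => h1 h2; apply: le_trans h2 h1.
case: k Hk => [|k] Hk.
  by case: u Hk {Hp} => //= _; rewrite !big_nil.
rewrite /= big_cons.
case Hau: (a \in u).
  have Pu := perm_to_rem Hau.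
  rewrite (perm_big _ Pu) big_cons lerD2l.
  apply: IH => //.
    exists v; rewrite -(perm_cons a); apply: (perm_trans Hp).
    by rewrite -cat_cons perm_cat2r.
  by move: Hk; rewrite (perm_size Pu).
have Hav : a \in v.
  by move: (perm_mem Hp a); rewrite mem_cat Hau inE eqxx /= => <-.
have Pv := perm_to_rem Hav.
have Hsub : perm_eq w (u ++ rem a v).
  rewrite -(perm_cons a); apply: (perm_trans Hp).
  apply: (@perm_trans _ (u ++ a :: rem a v)); first by rewrite perm_cat2l.
  by rewrite -cat1s (perm_catCA u [:: a]).
case: u Hk Hsub {Hau Hp} => [|b u] Hk Hsub.
  rewrite big_nil; apply: addr_ge0; first by apply: Hn; rewrite inE eqxx.
  by apply: sumr_ge0_seq => x /mem_take /Hn'.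
rewrite big_cons; apply: lerD.
  have : b \in w by rewrite (perm_mem Hsub) inE eqxx.
  by move/(allP Hall).
apply: IH => //; exists (b :: rem a v).
by apply: (perm_trans Hsub); rewrite /= -cat1s perm_catCA.
Qed.

Lemma sort_nonneg s : nonneg s -> nonneg (sort ge_rel s).
Proof. by move=> H x; rewrite mem_sort; apply: H. Qed.

Lemma sort_sorted_ge s : sorted ge_rel (sort ge_rel s).
Proof. apply: sort_sorted => x y; rewrite /ge_rel; apply: le_total. Qed.

Lemma maxsum_ge k s u : nonneg s -> subm u s ->
  kok k (size u) ->
  \sum_(x <- u) x <= maxsum k s.
Proof.
case: k => [k|] Hn Hu Hk /=; last exact: subm_sum.
apply: top_ge => //; [exact: sort_sorted_ge|exact: sort_nonneg|].
by apply: (subm_perm Hu); rewrite perm_sym perm_sort.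
Qed.

Lemma maxsum_attain k s : exists u, [/\ subm u s,
  kok k (size u) &
  maxsum k s = \sum_(x <- u) x].
Proof.
case: k => [k|] /=; last by exists s; split => //; exists [::]; rewrite cats0.
exists (take k (sort ge_rel s)); split => //; last by rewrite size_take; case: ltnP => // /ltnW.
exists (drop k (sort ge_rel s)); by rewrite cat_take_drop perm_sym perm_sort.
Qed.

Lemma maxsum_ge0 k s : nonneg s -> 0 <= maxsum k s.
Proof.
move=> Hn; have := @maxsum_ge k s [::] Hn.
rewrite big_nil; apply; last by case: k.
by exists s.
Qed.

Lemma maxsum_le_sum k s : nonneg s -> maxsum k s <= \sum_(x <- s) x.
Proof. by move=> Hn; case: (maxsum_attain k s) => u [Hu _ ->]; apply: subm_sum. Qed.

Lemma maxsum_perm k s t : nonneg s -> perm_eq s t -> maxsum k s = maxsum k t.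
Proof.
move=> Hn Hp.
have Hn' : nonneg t by move=> x; rewrite -(perm_mem Hp); apply: Hn.
apply/eqP; rewrite eq_le; apply/andP; split.
  case: (maxsum_attain k s) => u [Hu Hk ->].
  exact: (maxsum_ge Hn' (subm_perm Hu Hp) Hk).
case: (maxsum_attain k t) => u [Hu Hk ->].
by apply: (maxsum_ge Hn (subm_perm Hu _) Hk); rewrite perm_sym.
Qed.

Lemma maxsum_app k s t : nonneg (s ++ t) -> maxsum k s <= maxsum k (s ++ t).
Proof.
move=> Hn; case: (maxsum_attain k s) => u [Hu Hk ->].
exact: (maxsum_ge Hn (subm_cat t Hu) Hk).
Qed.

Lemma maxsum_elem k s x : nonneg s -> x \in s -> k <> Some 0%N -> x <= maxsum k s.
Proof.
move=> Hn xs Hk; have := @maxsum_ge k s [:: x] Hn; rewrite big_seq1; apply.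
  by exists (rem x s); apply: perm_to_rem.
by case: k Hk => // [[|k]].
Qed.

Lemma maxsum_small k s : (size s <= k)%N -> maxsum (Some k) s = \sum_(x <- s) x.
Proof.
move=> Hk /=; rewrite take_oversize ?size_sort //.
by apply: perm_big; rewrite perm_sort.
Qed.

Lemma subm_map_lift (T : eqType) (a : T -> R) (U : seq T) (u : seq R) :
  subm u (map a U) -> exists U1 U2, perm_eq U (U1 ++ U2) /\ u = map a U1.
Proof.
case=> v; elim: u U => [|x u IH] U Hp.
  by exists [::], U.
have : x \in map a U by rewrite (perm_mem Hp) inE eqxx.
case/mapP=> y yU Exy; subst x.
have Py := perm_to_rem yU.
have : perm_eq (map a (rem y U)) (u ++ v).
  rewrite -(perm_cons (a y)); apply: perm_trans Hp.
  by rewrite -map_cons perm_map // perm_sym.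
case/IH=> U1 [U2 [H1 H2]].
exists (y :: U1), U2; split; last by rewrite H2.
by apply: (perm_trans Py); rewrite /= perm_cons.
Qed.

Lemma maxsum_pw (T : eqType) k (U : seq T) (a b : T -> R) :
  (forall x, x \in U -> 0 <= a x) -> (forall x, x \in U -> a x <= b x) ->
  maxsum k (map a U) <= maxsum k (map b U).
Proof.
move=> Ha Hab.
have Hna : nonneg (map a U) by move=> y /mapP [x xU ->]; apply: Ha.
have Hnb : nonneg (map b U).
  by move=> y /mapP [x xU ->]; apply: le_trans (Ha x xU) (Hab x xU).
case: (maxsum_attain k (map a U)) => u [Hu Hk ->].
case: (subm_map_lift Hu) => U1 [U2 [HP Eu]]; subst u.
have U1U : {subset U1 <= U} by move=> x xU1; rewrite (perm_mem HP) mem_cat xU1.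
apply: (@le_trans _ _ (\sum_(x <- map b U1) x)).
  rewrite !big_map big_seq [X in _ <= X]big_seq; apply: ler_sum => x /U1U; apply: Hab.
apply: maxsum_ge => //; last by move: Hk; rewrite /kok !size_map.

by exists (map b U2); rewrite -map_cat perm_map.
Qed.

Lemma maxsum_dom (T : eqType) k (U : seq T) (W : seq nat) (a : T -> R)
    (h : T -> nat) (g : nat -> R) :
  uniq U -> uniq W -> {in U &, injective h} -> (forall x, x \in U -> h x \in W) ->
  (forall x, x \in U -> a x <= g (h x)) -> (forall y, y \in W -> 0 <= g y) ->
  (forall x, x \in U -> 0 <= a x) ->
  maxsum k (map a U) <= maxsum k (map g W).
Proof.
move=> uU uW hinj hW Hag Hg Ha.
have uhU : uniq (map h U) by rewrite map_inj_in_uniq.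
set W' := [seq y <- W | y \notin map h U].
have HP : perm_eq W (map h U ++ W').
  have HF : perm_eq W ([seq x <- W | x \in map h U] ++ W').
    by rewrite perm_sym (perm_filterC (mem (map h U)) W).
  apply: (perm_trans HF); rewrite perm_cat2r.
  apply: uniq_perm => //; first by apply: filter_uniq.
  move=> y; rewrite mem_filter; apply/andP/idP => [[]//|yh]; split => //.
  by case/mapP: yh => x xU ->; apply: hW.
have Hng : nonneg (map g W) by move=> z /mapP [y yW ->]; apply: Hg.
rewrite (maxsum_perm k Hng (perm_map g HP)) map_cat.
apply: (@le_trans _ _ (maxsum k (map g (map h U)))).
  rewrite -map_comp; apply: maxsum_pw => // x xU; exact: Hag.
apply: maxsum_app => z; rewrite -map_cat -(perm_mem (perm_map g HP)); apply: Hng.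
Qed.

Lemma top_zero (c k : nat) s : nonneg s -> (c <= k)%N ->
  (0 \in take c (sort ge_rel s)) ->
  maxsum (Some k) s = \sum_(x <- take c (sort ge_rel s)) x.
Proof.
move=> Hn Hck Hz /=; set w := sort ge_rel s.
rewrite -(subnKC Hck) takeD big_cat /= -[RHS]addr0; congr (_ + _).
have Htr : transitive ge_rel by move=> x y z; rewrite /ge_rel => h1 h2; apply: le_trans h2 h1.
have Hs : pairwise ge_rel (take c w ++ drop c w).
  by rewrite cat_take_drop -(sorted_pairwise Htr); apply: sort_sorted_ge.
move: Hs; rewrite pairwise_cat => /and3P [Har _ _].
have Hdrop : forall y, y \in drop c w -> y = 0.
  move=> y yd; apply/eqP; rewrite eq_le; apply/andP; split.
    by move/allrelP: Har => /(_ 0 y Hz yd).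
  by apply: (sort_nonneg Hn); apply: mem_drop yd.
rewrite big_seq big1 // => y /mem_take; apply: Hdrop.
Qed.

End MS.


Section AUX.
Variable R : realType.

Lemma opt_leastP (P : R -> Prop) m :
  opt_least P = Some m -> P m /\ forall r, P r -> m <= r.
Proof.
rewrite /opt_least; case: excluded_middle_informative => // h [<-].
by case: (constructive_indefinite_description _ h).
Qed.

Lemma opt_least_some (P : R -> Prop) :
  (exists m, P m /\ forall r, P r -> m <= r) -> exists m, opt_least P = Some m.
Proof. by rewrite /opt_least; case: excluded_middle_informative => // h _; eexists. Qed.

Lemma fin_least (l : seq R) (P : R -> Prop) :
  (exists r, P r) -> (forall r, P r -> r \in l) ->
  exists m, P m /\ forall r, P r -> m <= r.
Proof.
elim: l P => [|a l IH] P [r0 Pr0] Hl; first by move: (Hl _ Pr0).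
case: (classic (exists r, P r /\ r <> a)) => [[r1 [Pr1 ra]]|hno].
  have [m [[Pm ma] Hm]] : exists m, (P m /\ m <> a) /\
      forall r, P r /\ r <> a -> m <= r.
    apply: IH; first by exists r1.
    move=> r [Pr /eqP rna]; by move: (Hl _ Pr); rewrite inE (negbTE rna).
  case: (classic (P a)) => Pa.
    exists (Num.min a m); split; first by rewrite /Num.min; case: ifP.
    move=> r Pr; rewrite ge_min; case: (classic (r = a)) => [->|rna].
      by rewrite lexx.
    by rewrite Hm // orbT.
  exists m; split => // r Pr; apply: Hm; split => // ra'; by subst r.
exists a; have Pa : P a.
  by case: (classic (r0 = a)) => [<-//|h]; exfalso; apply: hno; exists r0.
split => // r Pr; case: (classic (r = a)) => [->//|h]; exfalso; apply: hno; by exists r.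
Qed.

Lemma least_natP (P : pred nat) n : P n -> P (least_nat P).
Proof.
move=> Pn; rewrite /least_nat; case: excluded_middle_informative => [h|h].
  by case: (ex_minnP h).
by exfalso; apply: h; exists n.
Qed.

Lemma sum_or (I : Type) (r : seq I) (f g : I -> R) (T : R) :
  (forall j, 0 <= f j) -> (forall j, g j <= f j \/ T <= f j) ->
  \sum_(j <- r) g j <= \sum_(j <- r) f j \/ T <= \sum_(j <- r) f j.
Proof.
move=> H0 H; elim: r => [|a r IH]; first by left; rewrite !big_nil.
rewrite !big_cons; case: (H a) => Ha.
  case: IH => IH; first by left; apply: lerD.
  by right; rewrite -[T]add0r; apply: lerD.
by right; rewrite -[T]addr0; apply: lerD => //; apply: sumr_ge0 => j _.
Qed.

Lemma sum_ge_size (s : seq R) x : (forall y, y \in s -> x <= y) ->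
  (size s)%:R * x <= \sum_(y <- s) y.
Proof.
elim: s => [|a s IH] H; first by rewrite big_nil mul0r.
rewrite big_cons /= -add1n natrD mulrDl mul1r; apply: lerD.
  by apply: H; rewrite inE eqxx.
by apply: IH => y ys; apply: H; rewrite inE ys orbT.
Qed.

End AUX.

Lemma size_flatten_le (T : eqType) (U : Type) (F : T -> seq U) (s : seq T) (B : nat) :
  (forall x, x \in s -> (size (F x) <= B)%N) -> (size (flatten (map F s)) <= size s * B)%N.
Proof.
elim: s => [|a s IH] H //=; rewrite size_cat mulSn; apply: leq_add.
  by apply: H; rewrite inE eqxx.
by apply: IH => x xs; apply: H; rewrite inE xs orbT.
Qed.

Lemma In_in (T : eqType) (x : T) (s : seq T) : List.In x s -> x \in s.
Proof. elim: s => //= a s IH [->|h]; rewrite inE ?eqxx //; by rewrite IH ?orbT. Qed.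

Lemma in_In (T : eqType) (x : T) (s : seq T) : x \in s -> List.In x s.
Proof. elim: s => //= a s IH; rewrite inE => /orP [/eqP->|h]; [by left|right; exact: IH]. Qed.

Lemma mapP_In (T1 : Type) (T2 : eqType) (f : T1 -> T2) (s : seq T1) z :
  z \in map f s -> exists x, List.In x s /\ z = f x.
Proof.
elim: s => //= a s IH; rewrite inE => /orP [/eqP->|/IH [x [xs ->]]]; first by exists a; split; [left|].
by exists x; split; [right|].
Qed.


Lemma minpos (R : realType) (l : seq R) :
  exists m : R, 0 < m /\ forall e, e \in l -> 0 < e -> m <= e.
Proof.
elim: l => [|a l [m [m0 Hm]]]; first by exists 1.
case: (ltrP 0 a) => a0.
  exists (Num.min a m); split; first by rewrite lt_min a0 m0.
  move=> e; rewrite inE => /orP [/eqP->|el] e0; first by rewrite ge_min lexx.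
  by rewrite ge_min Hm // orbT.
exists m; split => // e; rewrite inE => /orP [/eqP->|el] e0; last exact: Hm.
by exfalso; move: a0; rewrite leNgt e0.
Qed.

Fixpoint allseqs (T : Type) (F : seq T) (n : nat) : seq (seq T) :=
  [::] :: (if n is n'.+1 then flatten [seq [seq a :: s | s <- allseqs F n'] | a <- F] else [::]).

Lemma allseqsP (T : eqType) (F : seq T) n s :
  (size s <= n)%N -> {subset s <= F} -> s \in allseqs F n.
Proof.
elim: n s => [|n IH] [|a s] //= Hs HF; rewrite inE; apply/orP; right.
apply/flattenP; exists [seq a :: s0 | s0 <- allseqs F n].
  by apply/mapP; exists a => //; apply: HF; rewrite inE eqxx.
apply/mapP; exists s => //; apply: IH; first exact: Hs.
by move=> y ys; apply: HF; rewrite inE ys orbT.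
Qed.

Section XD.
Variables (R : realType) (Col : finType) (N : mgnn R Col) (delta : nat).
Hypothesis HN : monotonic_maxsum N delta.

Lemma sig_ge0 x : 0 <= sigma N x.
Proof.
case: HN => _ [_ [_ _ Hr]]; by apply/(Hr (sigma N x)); exists x.
Qed.

Lemma sig_mono x y : x <= y -> sigma N x <= sigma N y.
Proof. by case: HN => _ [_ [Hm _ _]]; apply: Hm. Qed.

Lemma sig_unb M : exists x, M < sigma N x.
Proof. by case: HN => _ [_ [_ Hu _]]. Qed.

Lemma wA_ge0 l i j : (1 <= l <= nL N)%N -> (i < dim N l)%N -> (j < dim N l.-1)%N ->
  0 <= mA N l i j.
Proof. by case: HN => _ [Hw _] Hl Hi Hj; case: (Hw l i j Hl Hi Hj). Qed.

Lemma wB_ge0 l c i j : (1 <= l <= nL N)%N -> (i < dim N l)%N -> (j < dim N l.-1)%N ->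
  0 <= mB N l c i j.
Proof. by case: HN => _ [Hw _] Hl Hi Hj; case: (Hw l i j Hl Hi Hj). Qed.

Lemma X_ge0 l i r : Xset N l i r -> 0 <= r.
Proof.
case: l => [|l] /=; first by case=> ->; rewrite ?ler01.
by case=> x [Y [_ [_ ->]]]; apply: sig_ge0.
Qed.

Lemma maxsum_ge0' k (s : seq R) : (forall x, x \in s -> 0 <= x) -> 0 <= maxsum k s.
Proof. exact: maxsum_ge0. Qed.

Lemma term_le_sum (I : finType) (F : I -> R) (j : I) : (forall j, 0 <= F j) -> F j <= \sum_(j : I) F j.
Proof.
move=> H; rewrite (bigD1 j) //= lerDl; apply: sumr_ge0 => i _; exact: H.
Qed.

Lemma weights_min l : (1 <= l <= nL N)%N -> exists w : R, 0 < w /\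
  forall i j, (i < dim N l)%N -> (j < dim N l.-1)%N ->
   (mA N l i j != 0 -> w <= mA N l i j) /\ (forall c, mB N l c i j != 0 -> w <= mB N l c i j).
Proof.
move=> Hl.
set E := flatten [seq flatten [seq mA N l i j :: [seq mB N l c i j | c <- enum Col]
                                | j <- iota 0 (dim N l.-1)] | i <- iota 0 (dim N l)].
case: (minpos E) => w [w0 Hw]; exists w; split => // i j Hi Hj.
have HE : forall e, (e = mA N l i j \/ exists c, e = mB N l c i j) -> e \in E.
  move=> e He; apply/flattenP.
  exists (flatten [seq mA N l i j0 :: [seq mB N l c i j0 | c <- enum Col]
                  | j0 <- iota 0 (dim N l.-1)]).
    by apply/mapP; exists i => //; rewrite mem_iota.
  apply/flattenP; exists (mA N l i j :: [seq mB N l c i j | c <- enum Col]).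
    by apply/mapP; exists j => //; rewrite mem_iota.
  case: He => [->|[c ->]]; first by rewrite inE eqxx.
  by rewrite inE; apply/orP; right; apply/mapP; exists c => //; rewrite mem_enum.
split.
  move=> nz; apply: Hw; first by apply: HE; left.
  by rewrite lt_def nz wA_ge0.
move=> c nz; apply: Hw; first by apply: HE; right; exists c.
by rewrite lt_def nz wB_ge0.
Qed.

Lemma Xfin l : (l <= nL N)%N -> forall M : R, exists F : seq R,
  forall i r, (i < dim N l)%N -> Xset N l i r -> r <= M -> r \in F.
Proof.
elim: l => [|l IH] HlL M.
  by exists [:: 0; 1] => i r _ /= [->|->] _; rewrite !inE eqxx ?orbT.
have Hl1 : (1 <= l.+1 <= nL N)%N by rewrite HlL.
case: (sig_unb M) => x0 Hx0.
set Bb := x0 + \sum_(i < dim N l.+1) `|bias N l.+1 i|.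
case: (weights_min Hl1) => w' [w'0 Hw'].
set M1 := Bb / w'.
case: (IH (ltnW HlL) M1) => F1 HF1.
case: (minpos F1) => x1 [x10 Hx1].
set n0 := Num.trunc (M1 / x1).
set G1 := [seq \sum_(y <- s) y | s <- allseqs F1 n0].
set F1' := 0 :: F1; set G1' := 0 :: G1.
pose Vf (i : nat) (g : {ffun 'I_(dim N l) -> 'I_(size F1).+1})
        (h : {ffun (Col * 'I_(dim N l)) -> 'I_(size G1).+1}) :=
  \sum_(j < dim N l) mA N l.+1 i j * nth 0 F1' (g j)
  + \sum_(c : Col) \sum_(j < dim N l) mB N l.+1 c i j * nth 0 G1' (h (c, j))
  + bias N l.+1 i.
exists (flatten [seq flatten [seq [seq sigma N (Vf i g h) | h <- enum {ffun (Col * 'I_(dim N l)) -> 'I_(size G1).+1}]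
                  | g <- enum {ffun 'I_(dim N l) -> 'I_(size F1).+1}] | i <- iota 0 (dim N l.+1)]).
move=> i r Hi [x [Y [Hx [HY ->]]]] HrM.
set Vl := Val N l.+1 i x Y.
have HV : Vl < x0.
  rewrite ltNge; apply/negP => h; move: (sig_mono h) => h'.
  by move: (lt_le_trans Hx0 h'); rewrite ltNge HrM.
have Hxj0 : forall j, (j < dim N l)%N -> 0 <= x j by move=> j /Hx /X_ge0.
have HYj0 : forall c j, (j < dim N l)%N ->
    forall z, z \in [seq y j | y <- Y c] -> 0 <= z.
  by move=> c j Hj z /mapP_In [y [yY ->]]; apply: (X_ge0 (HY c y j yY Hj)).
have tA0 : forall j : 'I_(dim N l), 0 <= mA N l.+1 i j * x j.
  by move=> j; apply: mulr_ge0; [apply: wA_ge0 | apply: Hxj0].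
have tB0 : forall c (j : 'I_(dim N l)), 0 <= mB N l.+1 c i j * maxsum (kagg N l.+1) [seq y (nat_of_ord j) | y <- Y c].
  by move=> c j; apply: mulr_ge0; [apply: wB_ge0 | apply: maxsum_ge0'; apply: HYj0].
have HSB0 : 0 <= \sum_(c : Col) \sum_(j < dim N l) mB N l.+1 c i j * maxsum (kagg N l.+1) [seq y (nat_of_ord j) | y <- Y c].
  by apply: sumr_ge0 => c _; apply: sumr_ge0 => j _; apply: tB0.
have HBb : Vl - bias N l.+1 i <= Bb.
  apply: ltW; apply: (@lt_le_trans _ _ (x0 - bias N l.+1 i)); first by rewrite ltrD2r.
  rewrite /Bb lerD2l; apply: (le_trans (ler_norm _)).
  rewrite normrN; have := @term_le_sum _ (fun i0 : 'I_(dim N l.+1) => `|bias N l.+1 i0|) (Ordinal Hi).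
  by apply => j.
have HVb : Vl - bias N l.+1 i = \sum_(j < dim N l) mA N l.+1 i j * x j +
   \sum_(c : Col) \sum_(j < dim N l) mB N l.+1 c i j * maxsum (kagg N l.+1) [seq y (nat_of_ord j) | y <- Y c].
  by rewrite /Vl /Val /= addrK.
have HtA : forall j : 'I_(dim N l), mA N l.+1 i j * x j <= Bb.
  move=> j; apply: (le_trans _ HBb); rewrite HVb.
  apply: (@le_trans _ _ (\sum_(j0 < dim N l) mA N l.+1 i j0 * x j0)).
    by apply: term_le_sum => j0; apply: tA0.
  by rewrite lerDl; exact: HSB0.
have HtB : forall c (j : 'I_(dim N l)), mB N l.+1 c i j * maxsum (kagg N l.+1) [seq y (nat_of_ord j) | y <- Y c] <= Bb.
  move=> c j; apply: (le_trans _ HBb); rewrite HVb.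
  apply: (@le_trans _ _ (\sum_(c : Col) \sum_(j0 < dim N l) mB N l.+1 c i j0 * maxsum (kagg N l.+1) [seq y (nat_of_ord j0) | y <- Y c])); last first.
    by rewrite lerDr; apply: sumr_ge0 => j0 _; apply: tA0.
  apply: (@le_trans _ _ (\sum_(j0 < dim N l) mB N l.+1 c i j0 * maxsum (kagg N l.+1) [seq y (nat_of_ord j0) | y <- Y c])).
    by apply: term_le_sum => j0; apply: tB0.
  apply: (@term_le_sum _ (fun c0 => \sum_(j0 < dim N l) mB N l.+1 c0 i j0 * maxsum (kagg N l.+1) [seq y (nat_of_ord j0) | y <- Y c0]) c).
  by move=> c0; apply: sumr_ge0 => j0 _; apply: tB0.
have Hdiv : forall (a t : R), a != 0 -> w' <= a -> 0 <= t -> a * t <= Bb -> t <= M1.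
  move=> a t _ wa t0 h; rewrite /M1 ler_pdivlMr // mulrC.
  by apply: le_trans h; apply: ler_wpM2r.
pose x' (j : nat) := if mA N l.+1 i j == 0 then 0 else x j.
have Hx'F : forall j : 'I_(dim N l), x' j \in F1'.
  move=> j; rewrite /x'; case: eqP => [_|/eqP nz]; first by rewrite inE eqxx.
  rewrite inE; apply/orP; right; apply: (HF1 j) => //; first exact: Hx.
  exact: (Hdiv _ _ nz (proj1 (Hw' i j Hi (ltn_ord j)) nz) (Hxj0 j (ltn_ord j)) (HtA j)).
pose y' (c : Col) (j : nat) := if mB N l.+1 c i j == 0 then 0
   else maxsum (kagg N l.+1) [seq y j | y <- Y c].
have Hy'G : forall c (j : 'I_(dim N l)), y' c j \in G1'.
  move=> c j; rewrite /y'; case: eqP => [_|/eqP nz]; first by rewrite inE eqxx.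
  rewrite inE; apply/orP; right.
  set S := [seq y (nat_of_ord j) | y <- Y c].
  have S0 : nonneg S by move=> z; apply: HYj0.
  have HSM : maxsum (kagg N l.+1) S <= M1.
    exact: (Hdiv _ _ nz (proj2 (Hw' i j Hi (ltn_ord j)) c nz) (maxsum_ge0' _ S0) (HtB c j)).
  case: (maxsum_attain (kagg N l.+1) S) => u [Hu _ Hsum].
  have u0 : nonneg u by apply: subm_nonneg Hu S0.
  have uS : {subset u <= S} by case: Hu => v Hp z zu; rewrite (perm_mem Hp) mem_cat zu.
  set u' := [seq z <- u | z != 0].
  have Hsu : \sum_(z <- u) z = \sum_(z <- u') z.
    rewrite /u' big_filter [RHS]big_mkcond /=; apply: eq_bigr => z _; by case: eqP.
  have HuM : forall z, z \in u' -> z <= M1.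
    move=> z; rewrite mem_filter => /andP [_ zu]; apply: le_trans HSM.
    rewrite Hsum; case: Hu => v Hp.
    have zu' := perm_to_rem zu; rewrite (perm_big _ zu') big_cons lerDl.
    by apply: sumr_ge0_seq => z' z'u; apply: u0; apply: mem_rem z'u.
  have HuX : forall z, z \in u' -> Xset N l j z.
    move=> z; rewrite mem_filter => /andP [_ /uS /mapP_In [y [yY ->]]].
    by apply: (HY c y j yY); apply: ltn_ord.
  have HuF : {subset u' <= F1}.
    by move=> z zu; apply: (HF1 j) => //; [exact: HuX | exact: HuM].
  have Hux : forall z, z \in u' -> x1 <= z.
    move=> z zu; apply: Hx1; first exact: HuF.
    move: zu; rewrite mem_filter => /andP [nz' zu]; by rewrite lt_def nz' u0.
  apply/mapP; exists u'; last by rewrite Hsum Hsu.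
  apply: allseqsP => //.
  have h1 := sum_ge_size Hux.
  have h2 : (size u')%:R * x1 <= M1.
    apply: le_trans h1 _; rewrite -Hsu -Hsum; exact: HSM.
  have M10 : 0 <= M1 / x1.
    apply: divr_ge0; last exact: ltW. apply: (le_trans _ h2); apply: mulr_ge0 => //; exact: ltW.
  rewrite /n0 truncn_ge_nat // ler_pdivlMr //.
apply/flattenP.
exists (flatten [seq [seq sigma N (Vf i g h) | h <- enum {ffun (Col * 'I_(dim N l)) -> 'I_(size G1).+1}]
                  | g <- enum {ffun 'I_(dim N l) -> 'I_(size F1).+1}]).
  by apply/mapP; exists i => //; rewrite mem_iota.
set g := [ffun j : 'I_(dim N l) => inord (index (x' j) F1') : 'I_(size F1).+1].
set h := [ffun cj : Col * 'I_(dim N l) => inord (index (y' cj.1 cj.2) G1') : 'I_(size G1).+1].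
apply/flattenP; exists [seq sigma N (Vf i g h0) | h0 <- enum {ffun (Col * 'I_(dim N l)) -> 'I_(size G1).+1}].
  by apply/mapP; exists g => //; rewrite mem_enum.
apply/mapP; exists h; first by rewrite mem_enum.
congr (sigma N _); rewrite /Vf /Val /=; congr (_ + _ + _).
  apply: eq_bigr => j _; rewrite ffunE inordK; last by rewrite -[(size F1).+1]/(size F1') index_mem Hx'F.
  rewrite nth_index ?Hx'F // /x'; by case: eqP => [->|]; rewrite ?mul0r.
apply: eq_bigr => c _; apply: eq_bigr => j _; rewrite ffunE inordK; last by rewrite -[(size G1).+1]/(size G1') index_mem; apply: Hy'G.
rewrite nth_index ?Hy'G // /y'; by case: eqP => [->|]; rewrite ?mul0r.
Qed.

Lemma x_of_none l : (1 <= l <= nL N)%N -> x_of N l = None ->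
  forall j r, (j < dim N l.-1)%N -> Xset N l.-1 j r -> r = 0.
Proof.
move=> /andP [Hl1 HlL] Hx j r Hj Hr; apply/eqP; apply/negPn/negP => nz.
have HlL' : (l.-1 <= nL N)%N by apply: leq_trans (leq_pred _) HlL.
case: (Xfin HlL' r) => F HF.
set P := fun z : R => z != 0 /\ exists i, (i < dim N l.-1)%N /\ Xset N l.-1 i z.
set P' := fun z : R => P z /\ z <= r.
case: (@fin_least R F P').
- by exists r; split => //; split => //; exists j.
- by move=> z [[_ [i [Hi Hz]]] zr]; apply: (HF i).
move=> m [[Pm mr] Hm].
case: (@opt_least_some R P).
  exists m; split => // z Pz; case: (lerP z r) => zr; first by apply: Hm.
  by apply: le_trans mr (ltW zr).
by move=> m' Hm'; move: Hx; rewrite /x_of Hm'.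
Qed.

End XD.


Section CAP.
Variable R : realType.

Lemma cap_core (k : option nat) (O : seq R) (x a : R) (c0 : nat) :
  nonneg O -> (forall y, y \in O -> y != 0 -> x <= y) -> a <= c0%:R * x -> kok k c0 ->
  maxsum k O <= \sum_(y <- take c0 (sort (@ge_rel R) O)) y \/
  a <= \sum_(y <- take c0 (sort (@ge_rel R) O)) y.
Proof.
move=> Hn Hx Ha Hkc.
set w := sort (@ge_rel R) O.
have Hw : nonneg w by apply: sort_nonneg.
case: (leqP (size O) c0) => hs.
  left; rewrite take_oversize ?size_sort //.
  have Hp : perm_eq w O by rewrite /w perm_sort.
  rewrite (perm_big _ Hp); exact: maxsum_le_sum.
case Hz: (0 \in take c0 w).
  left; case: k Hkc => [k'|] Hkc.
    by rewrite (top_zero Hn Hkc Hz).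
  rewrite -(top_zero Hn (ltnW hs) Hz) maxsum_small //.
right; apply: (le_trans Ha).
have Hsz : size (take c0 w) = c0 by rewrite size_take size_sort hs.
have := @sum_ge_size R (take c0 w) x; rewrite Hsz; apply => y yt; apply: Hx.
  by move: (mem_take yt); rewrite mem_sort.
by apply/negP => /eqP y0; move: Hz; rewrite -y0 yt.
Qed.

Lemma cap_lemma (k : option nat) (O : seq R) (x a : R) (c0 : nat) :
  nonneg O -> (forall y, y \in O -> y != 0 -> x <= y) -> a <= c0%:R * x ->
  maxsum k O <= \sum_(y <- take (match k with Some k' => minn k' c0 | None => c0 end) (sort (@ge_rel R) O)) y \/
  a <= \sum_(y <- take (match k with Some k' => minn k' c0 | None => c0 end) (sort (@ge_rel R) O)) y.
Proof.
move=> Hn Hx Ha; case: k => [k'|]; last by apply: (cap_core Hn Hx Ha).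
case: (leqP k' c0) => h.
  by left; apply: lexx.
apply: (cap_core Hn Hx Ha) => /=; exact: ltnW.
Qed.

Lemma ceil_bound (q x : R) : 0 < x ->
  q <= (if 0 <= Num.ceil (q / x) then `|Num.ceil (q / x)|%N else 0%N)%:R * x.
Proof.
move=> x0; set z := Num.ceil (q / x); have hz : q / x <= z%:~R by apply: ceil_ge.
case: ifP => h.
  move: hz h; case: z => [n|n] // hz _; rewrite absz_nat -ler_pdivrMr //; by rewrite -pmulrn.
have : q / x < 0 by apply: (le_lt_trans hz); rewrite ltrz0 ltNge h.
by rewrite mul0r pmulr_llt0 ?invr_gt0 // => /ltW.
Qed.

End CAP.


Section TR.
Variables (R : realType) (Col : finType) (delta : nat) (N : mgnn R Col).
Hypothesis HN : monotonic_maxsum N delta.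
Variable D : dataset Col delta.

Definition GD := enc R D.
Definition VD := terms D.
Definition orig l v := lab N GD l v.
Definition nbrs c v := [seq u <- VD | FE delta c v u \in D].
Definition LL := nL N.
Definition Cl l := nth 0%N (caps N LL (thr N)) (LL - l).
Definition sel l c v j := take (Cl l) (sort (relpre (fun u => orig l.-1 u j) (@ge_rel R)) (nbrs c v)).
Definition kept c v r := undup (flatten [seq flatten [seq sel l c v j | j <- iota 0 (dim N l.-1)] | l <- iota 1 r]).
Fixpoint tv (l : nat) (v r : nat) : nat -> R :=
  if l is l'.+1 then fun i => sigma N (Val N l'.+1 i (tv l' v r)
                                 (fun c => [seq tv l' u r.-1 | u <- kept c v r]))
  else glab GD v.

Lemma kept0 c v : kept c v 0 = [::]. Proof. by []. Qed.

Lemma VD_uniq : uniq VD. Proof. exact: undup_uniq. Qed.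

Lemma nbrs_uniq c v : uniq (nbrs c v). Proof. exact/filter_uniq/VD_uniq. Qed.

Lemma mem_nbrs c v u : (u \in nbrs c v) = (u \in VD) && (FE delta c v u \in D).
Proof. by rewrite mem_filter andbC. Qed.

Lemma sel_nbrs l c v j : {subset sel l c v j <= nbrs c v}.
Proof. by move=> u /mem_take; rewrite mem_sort. Qed.

Lemma sel_uniq l c v j : uniq (sel l c v j).
Proof. by apply: take_uniq; rewrite sort_uniq; apply: nbrs_uniq. Qed.

Lemma kept_uniq c v r : uniq (kept c v r). Proof. exact: undup_uniq. Qed.

Lemma kept_nbrs c v r : {subset kept c v r <= nbrs c v}.
Proof.
move=> u; rewrite mem_undup => /flattenP [s /mapP [l _ ->]] /flattenP [s' /mapP [j _ ->]].
exact: sel_nbrs.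
Qed.

Lemma sel_kept l c v j r : (1 <= l <= r)%N -> (j < dim N l.-1)%N ->
  {subset sel l c v j <= kept c v r}.
Proof.
move=> /andP [l1 lr] Hj u us; rewrite mem_undup; apply/flattenP.
exists (flatten [seq sel l c v j0 | j0 <- iota 0 (dim N l.-1)]).
  apply/mapP; exists l => //; rewrite mem_iota l1 /=; by rewrite add1n ltnS.
by apply/flattenP; exists (sel l c v j) => //; apply/mapP; exists j => //; rewrite mem_iota.
Qed.

Lemma Cl_le l : (Cl l <= capacity N)%N.
Proof.
rewrite /Cl /capacity; case: (ltnP (LL - l) (size (caps N LL (thr N)))) => h.
  by apply: (leq_bigmax_seq (F := id)) => //; apply: mem_nth.
by rewrite nth_default.
Qed.

Lemma dim_le l : (l <= LL)%N -> (dim N l <= delta_N N)%N.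
Proof.
move=> h; rewrite /delta_N.
by apply: (leq_bigmax_cond (F := fun l : 'I_(nL N).+1 => dim N l) (Ordinal (n := (nL N).+1) (m := l) h)).
Qed.

Lemma kept_size c v r : (r <= LL)%N ->
  (size (kept c v r) <= r * (delta_N N * capacity N))%N.
Proof.
move=> hr; apply: leq_trans (size_undup _) _.
have := @size_flatten_le _ _ (fun l => flatten [seq sel l c v j | j <- iota 0 (dim N l.-1)]) (iota 1 r) (delta_N N * capacity N).
rewrite size_iota; apply => l; rewrite mem_iota => /andP [l1 lr].
have := @size_flatten_le _ _ (fun j => sel l c v j) (iota 0 (dim N l.-1)) (capacity N).
rewrite size_iota => h; apply: leq_trans (h _) _.
  by move=> j _; rewrite size_take; apply: leq_trans (geq_minl _ _) (Cl_le _).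
apply: leq_mul => //; apply: dim_le.
by apply: leq_trans (leq_pred _) _; move: lr; rewrite add1n ltnS => lr; apply: leq_trans lr hr.
Qed.

Lemma glab01 v j : glab GD v j = 0 \/ glab GD v j = 1.
Proof. rewrite /GD /=; case: insub => [i|]; last by left. by case: ifP; [right|left]. Qed.

Lemma orig_X l v i : Xset N l i (orig l v i).
Proof.
elim: l v i => [|l IH] v i /=; first exact: glab01.
exists (orig l v), (fun c => [seq orig l u | u <- nbrs c v]); split; first by move=> j _; apply: IH.
by split => // c y j /List.in_map_iff [u [<- _]] _; apply: IH.
Qed.

Lemma orig_ge0 l v i : 0 <= orig l v i.
Proof. exact: (X_ge0 HN (orig_X l v i)). Qed.

Lemma tv_ge0 l v r i : 0 <= tv l v r i.
Proof.
case: l => [|l]; last exact: (sig_ge0 HN).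
by change (0 <= glab GD v i); case: (glab01 v i) => ->.
Qed.

Lemma Val_mono l i x x' (Y Y' : Col -> seq (nat -> R)) :
  (1 <= l <= LL)%N -> (i < dim N l)%N ->
  (forall j, (j < dim N l.-1)%N -> x j <= x' j) ->
  (forall c j, (j < dim N l.-1)%N -> maxsum (kagg N l) [seq y j | y <- Y c] <=
                                     maxsum (kagg N l) [seq y j | y <- Y' c]) ->
  Val N l i x Y <= Val N l i x' Y'.
Proof.
move=> Hl Hi Hx HY; rewrite /Val lerD2r; apply: lerD.
  apply: ler_sum => j _; apply: ler_wpM2l; [exact: (wA_ge0 HN Hl Hi (ltn_ord j)) | exact: Hx].
apply: ler_sum => c _; apply: ler_sum => j _; apply: ler_wpM2l.
  exact: (wB_ge0 HN c Hl Hi (ltn_ord j)).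
exact: HY.
Qed.

Lemma entries_fin l : exists E : seq R, forall i j, (i < dim N l)%N -> (j < dim N l.-1)%N ->
  mA N l i j \in E /\ forall c, mB N l c i j \in E.
Proof.
exists (flatten [seq flatten [seq mA N l i j :: [seq mB N l c i j | c <- enum Col]
                                | j <- iota 0 (dim N l.-1)] | i <- iota 0 (dim N l)]).
move=> i j Hi Hj.
have HE : forall e, (e = mA N l i j \/ exists c, e = mB N l c i j) ->
  e \in flatten [seq flatten [seq mA N l i0 j0 :: [seq mB N l c i0 j0 | c <- enum Col]
                                | j0 <- iota 0 (dim N l.-1)] | i0 <- iota 0 (dim N l)].
  move=> e He; apply/flattenP.
  exists (flatten [seq mA N l i j0 :: [seq mB N l c i j0 | c <- enum Col]
                  | j0 <- iota 0 (dim N l.-1)]).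
    by apply/mapP; exists i => //; rewrite mem_iota.
  apply/flattenP; exists (mA N l i j :: [seq mB N l c i j | c <- enum Col]).
    by apply/mapP; exists j => //; rewrite mem_iota.
  case: He => [->|[c ->]]; first by rewrite inE eqxx.
  by rewrite inE; apply/orP; right; apply/mapP; exists c => //; rewrite mem_enum.
split; first by apply: HE; left.
by move=> c; apply: HE; right; exists c.
Qed.

Lemma w_none l : w_of N l = None -> forall i j, (i < dim N l)%N -> (j < dim N l.-1)%N ->
  mA N l i j = 0 /\ forall c, mB N l c i j = 0.
Proof.
move=> Hw.
set P := fun r : R => r != 0 /\ exists i j, [/\ (i < dim N l)%N, (j < dim N l.-1)%N &
                     (r = mA N l i j \/ exists c, r = mB N l c i j)].
have H : forall e, ~ P e.
  move=> e Pe; case: (entries_fin l) => E HE.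
  case: (@fin_least R E P); first by exists e.
    move=> r [_ [i [j [Hi Hj Hr]]]]; case: (HE i j Hi Hj) => h1 h2.
    by case: Hr => [->|[c ->]].
  move=> m Hm; case: (@opt_least_some R P); first by exists m.
  by move=> m'; rewrite -/(w_of N l) Hw.
move=> i j Hi Hj; split.
  apply/eqP; apply/negPn/negP => nz; apply: (H (mA N l i j)); split => //.
  by exists i, j; split => //; left.
move=> c; apply/eqP; apply/negPn/negP => nz; apply: (H (mB N l c i j)); split => //.
by exists i, j; split => //; right; exists c.
Qed.

Lemma w_some l w : (1 <= l <= LL)%N -> w_of N l = Some w -> 0 < w /\
  forall i j, (i < dim N l)%N -> (j < dim N l.-1)%N ->
   (mA N l i j != 0 -> w <= mA N l i j) /\ (forall c, mB N l c i j != 0 -> w <= mB N l c i j).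
Proof.
move=> Hl /opt_leastP [[nz [i [j [Hi Hj Hr]]]] Hm]; split.
  rewrite lt_def nz /=; case: Hr => [->|[c ->]].
    exact: (wA_ge0 HN Hl Hi Hj).
  exact: (wB_ge0 HN c Hl Hi Hj).
move=> i' j' Hi' Hj'; split.
  by move=> nz'; apply: Hm; split => //; exists i', j'; split => //; left.
by move=> c nz'; apply: Hm; split => //; exists i', j'; split => //; right; exists c.
Qed.

Lemma x_some l x : x_of N l = Some x -> 0 < x /\
  forall j r, (j < dim N l.-1)%N -> Xset N l.-1 j r -> r != 0 -> x <= r.
Proof.
move=> /opt_leastP [[nz [i [Hi HX]]] Hm]; split.
  by rewrite lt_def nz /=; apply: (X_ge0 HN HX).
by move=> j r Hj Hr nz'; apply: Hm; split => //; exists j.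
Qed.

Lemma bmin_le l i : (i < dim N l)%N -> bmin_of N l <= bias N l i.
Proof.
move=> Hi.
set P := fun r : R => exists i0, (i0 < dim N l)%N /\ r = bias N l i0.
case: (@fin_least R [seq bias N l i0 | i0 <- iota 0 (dim N l)] P).
- by exists (bias N l i); exists i.
- by move=> r [i0 [Hi0 ->]]; apply/mapP; exists i0 => //; rewrite mem_iota.
move=> m Hm; case: (@opt_least_some R P); first by exists m.
move=> m' Hm'; rewrite /bmin_of -/P Hm' /=.
by case: (opt_leastP Hm') => _ h; apply: h; exists i.
Qed.

Lemma beta_ok (a : R) : a <= sigma N (least_nat (fun n => a <= sigma N n%:R))%:R.
Proof.
case: (sig_unb HN a) => y hy.
apply: (@least_natP (fun n => a <= sigma N n%:R) (Num.Def.archi_bound `|y|)).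
apply: (le_trans (ltW hy)); apply: (sig_mono HN).
apply: (le_trans (ler_norm y)); apply: ltW; apply: archi_boundP; exact: normr_ge0.
Qed.

Definition Ginv m (a : R) := forall v r j, v \in VD -> (m <= r)%N -> (r <= LL)%N ->
  (j < dim N m)%N -> orig m v j <= tv m v r j \/ a <= tv m v r j.

Lemma Val_w0 l i x Y : w_of N l = None -> (i < dim N l)%N -> Val N l i x Y = bias N l i.
Proof.
move=> Hw Hi; rewrite /Val !big1 ?add0r // => [c _|j _].
  by rewrite big1 // => j _; rewrite (proj2 (w_none Hw Hi (ltn_ord j))) mul0r.
by rewrite (proj1 (w_none Hw Hi (ltn_ord j))) mul0r.
Qed.

Lemma stop_inv m : (m.+1 <= LL)%N -> (w_of N m.+1 = None \/ x_of N m.+1 = None) ->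
  forall v r j, v \in VD -> (m.+1 <= r)%N -> (r <= LL)%N -> (j < dim N m.+1)%N ->
  orig m.+1 v j <= tv m.+1 v r j.
Proof.
move=> HmL Hstop v r j vV Hmr HrL Hj.
have Hl : (1 <= m.+1 <= LL)%N by rewrite HmL.
case: r Hmr HrL => [//|r'] Hmr HrL.
change (sigma N (Val N m.+1 j (orig m v) (fun c => [seq orig m u | u <- nbrs c v])) <=
        sigma N (Val N m.+1 j (tv m v r'.+1) (fun c => [seq tv m u r' | u <- kept c v r'.+1]))).
apply: (sig_mono HN).
case: Hstop => [Hw|Hx].
  by rewrite !Val_w0.
have H0 := x_of_none HN Hl Hx.
apply: Val_mono => // [j' Hj'|c j' Hj'].
  by rewrite (H0 j' _ Hj' (orig_X m v j')); apply: tv_ge0.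
apply: (@le_trans _ _ 0); last first.
  by apply: maxsum_ge0 => z /mapP_In [y [/List.in_map_iff [u [<- _]] ->]]; apply: tv_ge0.
apply: (le_trans (maxsum_le_sum _ _)).
  by move=> z /mapP_In [y [/List.in_map_iff [u [<- _]] ->]]; apply: orig_ge0.
rewrite big_seq big1 // => z /mapP_In [y [/List.in_map_iff [u [<- _]] ->]].
exact: (H0 j' _ Hj' (orig_X m u j')).
Qed.

Lemma step_inv m a w x : (m.+1 <= LL)%N -> w_of N m.+1 = Some w -> x_of N m.+1 = Some x ->
  Cl m.+1 = C_of N m.+1 (least_nat (fun n => a <= sigma N n%:R)) (bmin_of N m.+1) w x ->
  Ginv m (((least_nat (fun n => a <= sigma N n%:R))%:R - bmin_of N m.+1) / w) -> Ginv m.+1 a.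
Proof.
move=> HmL Hw Hx HC HG.
have Hb : a <= sigma N (least_nat (fun n => a <= sigma N n%:R))%:R := beta_ok a.
move: HC HG Hb; set be := least_nat _; set bmin := bmin_of N m.+1 => HC HG Hb.
set a' := (be%:R - bmin) / w in HG.
have Hl : (1 <= m.+1 <= LL)%N by rewrite HmL.
case: (w_some Hl Hw) => w0 Hwle.
case: (x_some Hx) => x0 Hxle.
have wa : w * a' = be%:R - bmin by rewrite /a' mulrC divfK // gt_eqF.
move=> v r i vV Hmr HrL Hi.
case: r Hmr HrL => [//|r'] Hmr HrL.
have Hmr' : (m <= r')%N by [].
have HrL' : (r' <= LL)%N by apply: ltnW.
change (sigma N (Val N m.+1 i (orig m v) (fun c => [seq orig m u | u <- nbrs c v])) <=
        sigma N (Val N m.+1 i (tv m v r'.+1) (fun c => [seq tv m u r' | u <- kept c v r'.+1])) \/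
        a <= sigma N (Val N m.+1 i (tv m v r'.+1) (fun c => [seq tv m u r' | u <- kept c v r'.+1]))).
suff : Val N m.+1 i (orig m v) (fun c => [seq orig m u | u <- nbrs c v]) <=
       Val N m.+1 i (tv m v r'.+1) (fun c => [seq tv m u r' | u <- kept c v r'.+1]) \/
       be%:R <= Val N m.+1 i (tv m v r'.+1) (fun c => [seq tv m u r' | u <- kept c v r'.+1]).
  case=> h; [left; exact: (sig_mono HN) | right; apply: (le_trans Hb); exact: (sig_mono HN)].
have hA : forall j : 'I_(dim N m),
   mA N m.+1 i j * orig m v j <= mA N m.+1 i j * tv m v r'.+1 j \/
   be%:R - bmin <= mA N m.+1 i j * tv m v r'.+1 j.
  move=> j; have Hj := ltn_ord j.
  case: (HG v r'.+1 j vV (ltnW Hmr) HrL Hj) => h.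
    by left; apply: ler_wpM2l => //; apply: (wA_ge0 HN Hl Hi Hj).
  case: (eqVneq (mA N m.+1 i j) 0) => [->|nz]; first by left; rewrite !mul0r.
  right; rewrite -wa; apply: (@le_trans _ _ (w * tv m v r'.+1 j)).
    by apply: ler_wpM2l => //; apply: ltW.
  apply: ler_wpM2r; [exact: tv_ge0 | exact: (proj1 (Hwle i j Hi Hj) nz)].
have hB : forall c (j : 'I_(dim N m)),
   maxsum (kagg N m.+1) [seq orig m u j | u <- nbrs c v] <=
   maxsum (kagg N m.+1) [seq tv m u r' j | u <- kept c v r'.+1] \/
   a' <= maxsum (kagg N m.+1) [seq tv m u r' j | u <- kept c v r'.+1].
  move=> c j; have Hj := ltn_ord j.
  set K := sel m.+1 c v j.
  have HKk : {subset K <= kept c v r'.+1} by apply: sel_kept => //; rewrite /= Hmr.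
  have HT0 : nonneg [seq tv m u r' j | u <- kept c v r'.+1].
    by move=> z /mapP [u _ ->]; apply: tv_ge0.
  case: (classic (exists2 u, u \in K & tv m u r' j < orig m u j)) => [[u uK hu]|hno].
    right.
    have uV : u \in VD by move: (kept_nbrs (HKk u uK)); rewrite mem_nbrs => /andP [].
    case: (HG u r' j uV Hmr' HrL' Hj) => h; first by move: hu; rewrite ltNge h.
    apply: (le_trans h); apply: (maxsum_elem HT0); first by apply: map_f; apply: HKk.
    move=> Hk0; move: uK; rewrite /K /sel HC /C_of Hk0 /= min0n take0 in_nil //.
  have hle : forall u, u \in K -> orig m u j <= tv m u r' j.
    move=> u uK; rewrite leNgt; apply/negP => h; apply: hno; by exists u.
  have H1 : maxsum (kagg N m.+1) [seq orig m u j | u <- K] <=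
            maxsum (kagg N m.+1) [seq tv m u r' j | u <- kept c v r'.+1].
    apply: (@maxsum_dom R _ _ K (kept c v r'.+1) (fun u => orig m u j) id (fun u => tv m u r' j)).
    - exact: sel_uniq.
    - exact: kept_uniq.
    - by move=> ? ? _ _.
    - exact: HKk.
    - exact: hle.
    - by move=> y _; apply: tv_ge0.
    - by move=> y _; apply: orig_ge0.
  have H3 : [seq orig m u j | u <- K] =
            take (Cl m.+1) (sort (@ge_rel R) [seq orig m u j | u <- nbrs c v]).
    by rewrite /K /sel map_take (sort_map (f := fun u => orig m u j)).
  set O := [seq orig m u j | u <- nbrs c v] in H3 *.
  have HO0 : nonneg O by move=> z /mapP [u _ ->]; apply: orig_ge0.
  have HOx : forall y, y \in O -> y != 0 -> x <= y.
    by move=> y /mapP [u _ ->] nz; apply: (Hxle j _ Hj (orig_X m u j) nz).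
  have Hcb := ceil_bound a' x0.
  have Eq : (be%:R - bmin) / (w * x) = a' / x by rewrite /a' invfM mulrA.
  have H2 : maxsum (kagg N m.+1) [seq orig m u j | u <- K] =
            \sum_(y <- [seq orig m u j | u <- K]) y.
    case Ek: (kagg N m.+1) => [k|] //; apply: maxsum_small.
    rewrite size_map /K /sel size_take HC /C_of Ek Eq /=.
    apply: leq_trans (geq_minl _ _) _; exact: geq_minl.
  have := cap_lemma (kagg N m.+1) HO0 HOx Hcb.
  rewrite -Eq -/(C_of N m.+1 be bmin w x) -HC -H3 -H2.
  case=> h; [left|right]; exact: (le_trans h H1).
have hB' : forall c (j : 'I_(dim N m)),
   mB N m.+1 c i j * maxsum (kagg N m.+1) [seq y (nat_of_ord j) | y <- [seq orig m u | u <- nbrs c v]] <=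
   mB N m.+1 c i j * maxsum (kagg N m.+1) [seq y (nat_of_ord j) | y <- [seq tv m u r' | u <- kept c v r'.+1]] \/
   be%:R - bmin <= mB N m.+1 c i j * maxsum (kagg N m.+1) [seq y (nat_of_ord j) | y <- [seq tv m u r' | u <- kept c v r'.+1]].
  move=> c j; have Hj := ltn_ord j; rewrite -!map_comp.
  have HT0 : 0 <= maxsum (kagg N m.+1) [seq tv m u r' j | u <- kept c v r'.+1].
    by apply: maxsum_ge0 => z /mapP [u _ ->]; apply: tv_ge0.
  case: (hB c j) => h.
    by left; apply: ler_wpM2l => //; apply: (wB_ge0 HN c Hl Hi Hj).
  case: (eqVneq (mB N m.+1 c i j) 0) => [->|nz]; first by left; rewrite !mul0r.
  right; rewrite -wa; apply: (@le_trans _ _ (w * maxsum (kagg N m.+1) [seq tv m u r' j | u <- kept c v r'.+1])).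
    by apply: ler_wpM2l => //; apply: ltW.
  by apply: ler_wpM2r => //; exact: (proj2 (Hwle i j Hi Hj) c nz).
have SA := sum_or (index_enum 'I_(dim N m)) (fun j => mulr_ge0 (wA_ge0 HN Hl Hi (ltn_ord j)) (tv_ge0 m v r'.+1 j)) hA.
have SBc : forall c,
  \sum_(j < dim N m) mB N m.+1 c i j * maxsum (kagg N m.+1) [seq y (nat_of_ord j) | y <- [seq orig m u | u <- nbrs c v]] <=
  \sum_(j < dim N m) mB N m.+1 c i j * maxsum (kagg N m.+1) [seq y (nat_of_ord j) | y <- [seq tv m u r' | u <- kept c v r'.+1]] \/
  be%:R - bmin <= \sum_(j < dim N m) mB N m.+1 c i j * maxsum (kagg N m.+1) [seq y (nat_of_ord j) | y <- [seq tv m u r' | u <- kept c v r'.+1]].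
  move=> c; apply: sum_or => // j; apply: mulr_ge0; first exact: (wB_ge0 HN c Hl Hi (ltn_ord j)).
  by apply: maxsum_ge0 => z /mapP_In [y [/List.in_map_iff [u [<- _]] ->]]; apply: tv_ge0.
have HnnB : forall c, 0 <= \sum_(j < dim N m) mB N m.+1 c i j * maxsum (kagg N m.+1) [seq y (nat_of_ord j) | y <- [seq tv m u r' | u <- kept c v r'.+1]].
  move=> c; apply: sumr_ge0 => j _; apply: mulr_ge0; first exact: (wB_ge0 HN c Hl Hi (ltn_ord j)).
  by apply: maxsum_ge0 => z /mapP_In [y [/List.in_map_iff [u [<- _]] ->]]; apply: tv_ge0.
have SB := sum_or (index_enum Col) HnnB SBc.
have Hbi := bmin_le Hi.
rewrite /Val /=.
have HSA0 : 0 <= \sum_(j < dim N m) mA N m.+1 i j * tv m v r'.+1 j.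
  by apply: sumr_ge0 => j _; apply: mulr_ge0; [exact: (wA_ge0 HN Hl Hi (ltn_ord j)) | exact: tv_ge0].
have HSB0 : 0 <= \sum_(c : Col) \sum_(j < dim N m) mB N m.+1 c i j * maxsum (kagg N m.+1) [seq y (nat_of_ord j) | y <- [seq tv m u r' | u <- kept c v r'.+1]].
  apply: sumr_ge0 => c _; apply: sumr_ge0 => j _; apply: mulr_ge0; first exact: (wB_ge0 HN c Hl Hi (ltn_ord j)).
  by apply: maxsum_ge0 => z /mapP_In [y [/List.in_map_iff [u [<- _]] ->]]; apply: tv_ge0.
case: SA => hsa; case: SB => hsb.
- by left; rewrite lerD2r; apply: lerD.
- right; rewrite -[be%:R](subrK bmin); apply: lerD => //.
  by rewrite -[be%:R - bmin]add0r; apply: lerD.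
- right; rewrite -[be%:R](subrK bmin); apply: lerD => //.
  by rewrite -[be%:R - bmin]addr0; apply: lerD.
- right; rewrite -[be%:R](subrK bmin); apply: lerD => //.
  by rewrite -[be%:R - bmin]addr0; apply: lerD.
Qed.

Lemma inv_all m a : (m <= LL)%N ->
  (forall l, (1 <= l <= m)%N -> Cl l = nth 0%N (caps N m a) (m - l)) -> Ginv m a.
Proof.
elim: m a => [|m IH] a HmL HCl.
  by move=> v r j _ _ _ _; left.
move: HCl => /=.
case Ew: (w_of N m.+1) => [w|]; case Ex: (x_of N m.+1) => [x|] HCl;
  try (by move=> v r j vV Hmr HrL Hj; left; apply: stop_inv => //; first [by left | by right]).
apply: (step_inv HmL Ew Ex).
  by have := HCl m.+1; rewrite leqnn subnn /=; apply.
apply: IH; first exact: ltnW.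
move=> l /andP [l1 lm]; rewrite HCl ?l1 ?(leq_trans lm) //.
by rewrite subSn.
Qed.

Lemma inv_top : Ginv LL (thr N).
Proof. by apply: inv_all => // l _. Qed.

End TR.


Lemma In_cat (T : Type) (x : T) s1 s2 : List.In x (s1 ++ s2) <-> List.In x s1 \/ List.In x s2.
Proof. exact: List.in_app_iff. Qed.

Lemma In_map (T U : Type) (f : T -> U) y s : List.In y (map f s) <-> exists x, f x = y /\ List.In x s.
Proof. exact: List.in_map_iff. Qed.

Lemma In_flatten (T : Type) (x : T) ss : List.In x (flatten ss) <-> exists s, List.In s ss /\ List.In x s.
Proof.
elim: ss => [|s ss IH] /=; first by split => // [[s []]].
rewrite In_cat IH; split.
  by case=> [h|[s' [h1 h2]]]; [exists s; split; [left|] | exists s'; split; [right|]].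
by case=> s' [[<-|h1] h2]; [left|right; exists s'].
Qed.

Lemma In_filter (T : Type) (p : pred T) x s : List.In x (filter p s) <-> List.In x s /\ p x.
Proof.
elim: s => [|a s IH] /=; first by split => // [[]].
case: ifP => pa.
  rewrite /= IH; split.
    case=> [<-|[h1 h2]]; split => //; [by left | by right].
  by case=> [[<-|h1] h2]; [left|right].
rewrite IH; split.
  by case=> h1 h2; split => //; right.
by case=> [[<-|h1] h2]; [rewrite pa in h2|].
Qed.

Lemma neq_pairsP (Col : finType) (delta : nat) (ys : seq nat) (l : literal Col delta) :
  List.In l (@neq_pairs Col delta ys) <-> exists i j, (i < j < size ys)%N /\
     l = LNeq Col delta (Var (nth 0%N ys i)) (Var (nth 0%N ys j)).
Proof.
elim: ys => [|y ys IH] /=; first by split => // [[i [j []]]]; rewrite ltn0 andbF.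
rewrite In_cat In_map IH; split.
  case=> [[z [<- zs]]|[i [j [Hij ->]]]].
    exists 0%N, (index z ys).+1; split => /=; last by rewrite nth_index //; apply: In_in.
    by rewrite ltnS index_mem; apply: In_in.
  by exists i.+1, j.+1.
case=> [[|i] [[|j] [Hij ->]]] //.
  left; exists (nth 0%N ys j); split => //; apply: in_In; apply: mem_nth.
  by move: Hij; rewrite /= ltnS.
right; exists i, j; split => //.
Qed.

Section TB.
Variables (R : realType) (Col : finType) (delta : nat) (N : mgnn R Col).
Hypothesis HN : monotonic_maxsum N delta.
Variable D : dataset Col delta.

Local Notation kept := (kept N D).
Local Notation tv := (tv N D).
Local Notation orig := (orig N D).
Local Notation lit := (literal Col delta).

Definition yv (q : seq (Col * nat)) c k : nat := pickle (rcons q (c, k)).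

Definition unary (q : seq (Col * nat)) (v : nat) : seq lit :=
  [seq LAtom (AU Col j (Var (pickle q))) | j <- enum 'I_delta & FU Col j v \in D].

Fixpoint body_of (r : nat) (q : seq (Col * nat)) (v : nat) : seq lit :=
  unary q v ++
  (if r is r'.+1 then
     flatten [seq edge_group (pickle q) c
       [seq (yv q c k, body_of r' (rcons q (c, k)) (nth 0%N (kept c v r) k))
         | k <- iota 0 (size (kept c v r))] | c <- enum Col]
   else [::]).

Definition chl r' q v c :=
  [seq (yv q c k, body_of r' (rcons q (c, k)) (nth 0%N (kept c v r'.+1) k))
    | k <- iota 0 (size (kept c v r'.+1))].

Lemma body_S r' q v : body_of r'.+1 q v =
  unary q v ++ flatten [seq edge_group (pickle q) c (chl r' q v c) | c <- enum Col].
Proof. by []. Qed.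

Lemma chl_fst r' q v c : map fst (chl r' q v c) = [seq yv q c k | k <- iota 0 (size (kept c v r'.+1))].
Proof. by rewrite /chl -map_comp. Qed.

Lemma nth_yv q c n i : (i < n)%N -> nth 0%N [seq yv q c k | k <- iota 0 n] i = yv q c i.
Proof. by move=> h; rewrite (nth_map 0%N) ?size_iota // nth_iota. Qed.

Lemma In_edge_group x c (ch : seq (nat * seq lit)) l :
  List.In l (edge_group x c ch) <->
  (exists yp, List.In yp ch /\ (l = LAtom (AE delta c (Var x) (Var yp.1)) \/ List.In l yp.2)) \/
  List.In l (@neq_pairs Col delta (map fst ch)).
Proof.
rewrite /edge_group In_cat In_flatten; split.
  case=> [[s [/In_map [yp [<- Hyp]] Hl]]|h]; last by right.
  by left; exists yp; split => //; case: Hl => [<-|h]; [left|right].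
case=> [[yp [Hyp Hl]]|h]; last by right.
left; exists (LAtom (AE delta c (Var x) (Var yp.1)) :: yp.2); split.
  by apply/In_map; exists yp.
by case: Hl => [->|h]; [left|right].
Qed.

Lemma body_cases r q v l : List.In l (body_of r q v) ->
  (exists j : 'I_delta, FU Col j v \in D /\ l = LAtom (AU Col j (Var (pickle q)))) \/
  (exists r' c k, r = r'.+1 /\ (k < size (kept c v r))%N /\
     (l = LAtom (AE delta c (Var (pickle q)) (Var (yv q c k))) \/
      List.In l (body_of r' (rcons q (c, k)) (nth 0%N (kept c v r) k)))) \/
  (exists r' c k1 k2, r = r'.+1 /\ (k1 < k2 < size (kept c v r))%N /\
     l = LNeq Col delta (Var (yv q c k1)) (Var (yv q c k2))).
Proof.
case: r => [|r'] /=; rewrite In_cat.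
  case=> [/In_map [j [<- /In_filter [_ Hj]]]|[]]; by left; exists j.
case=> [/In_map [j [<- /In_filter [_ Hj]]]|]; first by left; exists j.
case/In_flatten => s [/In_map [c [<- _]]] /In_edge_group [[yp [/In_map [k [<- Hk]] Hl]]|Hn].
  right; left; exists r', c, k; split => //; split; last by [].
  by move: (In_in Hk); rewrite mem_iota.
right; right; move: Hn; rewrite -/(chl r' q v c) chl_fst => /neq_pairsP [i [j [Hij ->]]].
move: Hij; rewrite size_map size_iota => Hij.
exists r', c, i, j; split => //; split => //.
by case/andP: Hij => h1 h2; rewrite !nth_yv // (ltn_trans h1 h2).
Qed.

Lemma body_unary_in r q v (j : 'I_delta) : FU Col j v \in D ->
  List.In (LAtom (AU Col j (Var (pickle q)))) (body_of r q v).
Proof.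
move=> Hj; case: r => [|r'] /=; apply/In_cat; left; apply/In_map; exists j; split => //;
  apply/In_filter; split => //; apply: in_In; exact: mem_enum.
Qed.

Lemma body_edge_in r' q v c k : (k < size (kept c v r'.+1))%N ->
  List.In (LAtom (AE delta c (Var (pickle q)) (Var (yv q c k)))) (body_of r'.+1 q v).
Proof.
move=> Hk; rewrite body_S; apply/In_cat; right; apply/In_flatten.
exists (edge_group (pickle q) c (chl r' q v c)); split.
  by apply/In_map; exists c; split => //; apply: in_In; exact: mem_enum.
apply/In_edge_group; left; exists (yv q c k, body_of r' (rcons q (c, k)) (nth 0%N (kept c v r'.+1) k)).
split; last by left.
by apply/In_map; exists k; split => //; apply: in_In; rewrite mem_iota.
Qed.

Lemma body_child_in r' q v c k l : (k < size (kept c v r'.+1))%N ->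
  List.In l (body_of r' (rcons q (c, k)) (nth 0%N (kept c v r'.+1) k)) ->
  List.In l (body_of r'.+1 q v).
Proof.
move=> Hk Hl; rewrite body_S; apply/In_cat; right; apply/In_flatten.
exists (edge_group (pickle q) c (chl r' q v c)); split.
  by apply/In_map; exists c; split => //; apply: in_In; exact: mem_enum.
apply/In_edge_group; left; exists (yv q c k, body_of r' (rcons q (c, k)) (nth 0%N (kept c v r'.+1) k)).
split; last by right.
by apply/In_map; exists k; split => //; apply: in_In; rewrite mem_iota.
Qed.

Lemma body_neq_in r' q v c k1 k2 : (k1 < k2 < size (kept c v r'.+1))%N ->
  List.In (LNeq Col delta (Var (yv q c k1)) (Var (yv q c k2))) (body_of r'.+1 q v).
Proof.
move=> Hk; rewrite body_S; apply/In_cat; right; apply/In_flatten.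
exists (edge_group (pickle q) c (chl r' q v c)); split.
  by apply/In_map; exists c; split => //; apply: in_In; exact: mem_enum.
apply/In_edge_group; right; rewrite chl_fst; apply/neq_pairsP.
exists k1, k2; rewrite size_map size_iota; split => //.
by case/andP: Hk => h1 h2; rewrite !nth_yv // (ltn_trans h1 h2).
Qed.

Lemma mem_vars (phi : seq lit) z : z \in vars phi <-> exists l, List.In l phi /\ z \in lit_vars l.
Proof.
elim: phi => [|l phi IH]; first by split => // [[l []]].
rewrite /vars /= mem_cat -/(vars phi); split.
  case/orP => [h|/IH [l' [h1 h2]]]; first by exists l; split => //; left.
  by exists l'; split => //; right.
case=> l' [[<-|h1] h2]; first by rewrite h2.
by apply/orP; right; apply/IH; exists l'.
Qed.

Lemma pickle_inj' (s1 s2 : seq (Col * nat)) : pickle s1 = pickle s2 -> s1 = s2.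
Proof. exact: (pcan_inj pickleK). Qed.

Lemma rcons_cat_inj (q : seq (Col * nat)) a b s s' :
  pickle (rcons q a ++ s) = pickle (rcons q b ++ s') -> a = b /\ s = s'.
Proof.
move/pickle_inj'; rewrite !cat_rcons => h.
have := congr1 (drop (size q)) h; rewrite !drop_size_cat //; by case.
Qed.

Lemma pickle_neq_ext (q : seq (Col * nat)) a s : pickle q <> pickle (rcons q a ++ s).
Proof. move/pickle_inj'/(congr1 size); rewrite size_cat size_rcons => /eqP; lia. Qed.

Lemma vars_prefix r q v z : z \in vars (body_of r q v) -> exists s, z = pickle (q ++ s).
Proof.
elim: r q v => [|r IH] q v /mem_vars [l [Hl Hz]]; move: Hz;
  case: (body_cases Hl) => [[j [_ ->]]|[[r' [c [k [Er [Hk Hl']]]]]|[r' [c [k1 [k2 [Er [Hk ->]]]]]]]] Hz //.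
- by exists [::]; move: Hz; rewrite /= inE cats0 => /eqP.
- by exists [::]; move: Hz; rewrite /= inE cats0 => /eqP.
- case: Hl' => [Hl'|Hl'].
    move: Hz; rewrite Hl' /= !inE => /orP [/eqP ->|/eqP ->]; first by exists [::]; rewrite cats0.
    by exists [:: (c, k)]; rewrite /yv cats1.
  case: Er => Er; subst r'; have := IH (rcons q (c, k)) (nth 0%N (kept c v r.+1) k).
  case; first by apply/mem_vars; exists l.
  by move=> s ->; exists ((c, k) :: s); rewrite cat_rcons.
- move: Hz; rewrite /= !inE => /orP [/eqP ->|/eqP ->].
    by exists [:: (c, k1)]; rewrite /yv cats1.
  by exists [:: (c, k2)]; rewrite /yv cats1.
Qed.

Lemma tl_unary x (js : seq 'I_delta) : treelike x [seq LAtom (AU Col j (Var x)) | j <- js].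
Proof.
elim: js => [|j js IH] /=; first exact: (TL_top Col delta x).
have := TL_and (TL_unary Col x j) IH; apply.
by move=> z; rewrite /vars /= inE => /eqP.
Qed.

Lemma vars_unary q v z : z \in vars (unary q v) -> z = pickle q.
Proof.
case/mem_vars => l [/In_map [j [<- _]]]; by rewrite /= inE => /eqP.
Qed.

Lemma child_vars r q c k u z : z \in yv q c k :: vars (body_of r (rcons q (c, k)) u) ->
  exists s, z = pickle (rcons q (c, k) ++ s).
Proof.
rewrite inE => /orP [/eqP ->|/vars_prefix //]; by exists [::]; rewrite cats0.
Qed.

Lemma nth_chl r q v c i : (i < size (kept c v r.+1))%N ->
  nth (0%N, [::]) (chl r q v c) i = (yv q c i, body_of r (rcons q (c, i)) (nth 0%N (kept c v r.+1) i)).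
Proof. by move=> h; rewrite /chl (nth_map 0%N) ?size_iota // nth_iota. Qed.

Lemma group_vars r q v c z : z \in vars (edge_group (pickle q) c (chl r q v c)) ->
  z = pickle q \/ exists k s, z = pickle (rcons q (c, k) ++ s).
Proof.
case/mem_vars => l [/In_edge_group [[yp [/In_map [k [<- _]] Hl]]|Hn] Hz].
  case: Hl => [Hl|Hl].
    move: Hz; rewrite Hl /= !inE => /orP [/eqP ->|/eqP ->]; first by left.
    by right; exists k, [::]; rewrite cats0.
  have : z \in yv q c k :: vars (body_of r (rcons q (c, k)) (nth 0%N (kept c v r.+1) k)).
    by rewrite inE; apply/orP; right; apply/mem_vars; exists l.
  by case/child_vars => s ->; right; exists k, s.
move: Hn; rewrite chl_fst => /neq_pairsP [i [j [Hij Hl]]].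
move: Hz; rewrite Hl /= !inE; move: Hij; rewrite size_map size_iota => /andP [h1 h2].
case/orP => /eqP ->; rewrite nth_yv //; try exact: (ltn_trans h1 h2);
  by right; eexists; exists [::]; rewrite cats0.
Qed.

Lemma groups_vars r q v (cs : seq Col) z :
  z \in vars (flatten [seq edge_group (pickle q) c (chl r q v c) | c <- cs]) ->
  z = pickle q \/ exists c k s, c \in cs /\ z = pickle (rcons q (c, k) ++ s).
Proof.
case/mem_vars => l [/In_flatten [g [/In_map [c [<- Hc]] Hl]] Hz].
have : z \in vars (edge_group (pickle q) c (chl r q v c)) by apply/mem_vars; exists l.
case/group_vars => [->|[k [s ->]]]; first by left.
by right; exists c, k, s; split => //; apply: In_in.
Qed.

Lemma tl_body r q v : treelike (pickle q) (body_of r q v).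
Proof.
elim: r q v => [|r IH] q v.
  have := TL_and (tl_unary (pickle q) [seq j <- enum 'I_delta | FU Col j v \in D]) (TL_top Col delta (pickle q)).
  by apply; move=> z _; rewrite /vars /= in_nil.
have Hg : forall c, treelike (pickle q) (edge_group (pickle q) c (chl r q v c)).
  move=> c; apply: TL_edges.
  - rewrite chl_fst map_inj_uniq ?iota_uniq // => k1 k2 /pickle_inj' h.
    by have := congr1 (fun s => last (c, 0%N) s) h; rewrite !last_rcons; case.
  - by move=> yp /In_map [k [<- _]]; apply: IH.
  - move=> yp /In_map [k [<- _]] /=; apply/negP => /child_vars [s] h.
    by apply: (pickle_neq_ext h).
  - move=> i j; rewrite size_map size_iota => /andP [h1 h2] z.
    rewrite !nth_chl //; last exact: (ltn_trans h1 h2).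
    move=> /child_vars [s ->]; apply/negP => /child_vars [s'] /rcons_cat_inj [[E] _].
    by move: h1; rewrite E ltnn.
have Hgs : forall cs : seq Col, uniq cs ->
    treelike (pickle q) (flatten [seq edge_group (pickle q) c (chl r q v c) | c <- cs]).
  elim => [|c cs IHc] /=; first by move=> _; exact: (TL_top Col delta (pickle q)).
  case/andP => cn ucs; have := TL_and (Hg c) (IHc ucs); apply.
  move=> z /group_vars [->//|[k [s ->]]] /groups_vars [//|[c' [k' [s' [c'cs /rcons_cat_inj [[Ec _] _]]]]]].
  by move: cn; rewrite Ec c'cs.
rewrite body_S; have := TL_and (tl_unary (pickle q) [seq j <- enum 'I_delta | FU Col j v \in D]) (Hgs (enum Col) (enum_uniq _)).
by apply => z /vars_unary.
Qed.

Lemma targetsP (phi : seq lit) z y : y \in flatten (map (succs z) phi) <->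
  exists c, List.In (LAtom (AE delta c (Var z) (Var y))) phi.
Proof.
elim: phi => [|l phi IH]; first by split => // [[c []]].
have -> : flatten (map (succs z) (l :: phi)) = succs z l ++ flatten (map (succs z) phi) by [].
rewrite mem_cat; split.
  case/orP => [h|/IH [c h]]; last by exists c; right.
  move: h; case: l => [[c [a|a] [b|b]|i t]|s t] //=; case: eqP => //= -> ; rewrite inE => /eqP ->.
  by exists c; left.
case=> c [->|h]; first by rewrite /= eqxx inE eqxx.
by apply/orP; right; apply/IH; exists c.
Qed.

Lemma edge_var (phi : seq lit) c w y : List.In (LAtom (AE delta c (Var w) (Var y))) phi -> w \in vars phi.
Proof. by move=> h; apply/mem_vars; eexists; split; first exact: h; rewrite /= inE eqxx. Qed.

Lemma edge_lits r q v c w y : List.In (LAtom (AE delta c (Var w) (Var y))) (body_of r q v) ->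
  (w = pickle q /\ exists k, (k < size (kept c v r))%N /\ y = yv q c k) \/
  exists r' c0 k0, r = r'.+1 /\ (k0 < size (kept c0 v r))%N /\
    List.In (LAtom (AE delta c (Var w) (Var y))) (body_of r' (rcons q (c0, k0)) (nth 0%N (kept c0 v r) k0)).
Proof.
move=> Hl; case: (body_cases Hl) => [[j [_ //]]|[[r' [c0 [k [Er [Hk [E|Hl']]]]]]|[r' [c0 [k1 [k2 [_ [_ //]]]]]]]].
  by case: E => -> -> ->; left; split => //; exists k.
by right; exists r', c0, k.
Qed.

Lemma edge_form r q v c w y : List.In (LAtom (AE delta c (Var w) (Var y))) (body_of r q v) ->
  exists s k', [/\ w = pickle (q ++ s), y = pickle (q ++ rcons s (c, k')) & (size s < r)%N].
Proof.
elim: r q v => [|r IH] q v /edge_lits [[-> [k [Hk ->]]]|[r' [c0 [k0 [Er [Hk Hl]]]]]] //.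
- by exists [::], k; rewrite cats0 /yv cats1.
case: Er => Er; subst r'; case: (IH _ _ Hl) => s [k' [-> -> Hs]].
by exists ((c0, k0) :: s), k'; rewrite !cat_rcons.
Qed.

Definition FF := (#|Col| * delta_N N * capacity N)%N.

Lemma pickle_neq_ext' (q : seq (Col * nat)) a s : pickle q <> pickle (q ++ a :: s).
Proof. by rewrite -cat_rcons; apply: pickle_neq_ext. Qed.

Lemma fanout_bound r q v s : (r <= LL N)%N ->
  (fanout (body_of r q v) (pickle (q ++ s)) <= FF * (r - size s))%N.
Proof.
elim: r q v s => [|r IH] q v s HrL.
  rewrite /fanout; case: (undup _) (undup_uniq (flatten (map (succs (pickle (q ++ s))) (body_of 0 q v)))) (@mem_undup _ (flatten (map (succs (pickle (q ++ s))) (body_of 0 q v)))) => [//|y ys] _ /(_ y).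
  rewrite inE eqxx => /esym /targetsP [c] /edge_lits [[_ [k [Hk _]]]|[r' [_ [_ [//]]]]].
  by move: Hk; rewrite kept0.
case: s => [|[c0 k0] s'].
  rewrite cats0 subn0 /fanout.
  set Y := flatten [seq [seq yv q c k | k <- iota 0 (size (kept c v r.+1))] | c <- enum Col].
  apply: (@leq_trans (size Y)).
    apply: uniq_leq_size; first exact: undup_uniq.
    move=> y; rewrite mem_undup => /targetsP [c] /edge_lits [[_ [k [Hk ->]]]|[r' [c1 [k1 [Er [Hk Hl]]]]]].
      apply/flattenP; exists [seq yv q c k0 | k0 <- iota 0 (size (kept c v r.+1))].
        by apply/mapP; exists c => //; rewrite mem_enum.
      by apply/mapP; exists k => //; rewrite mem_iota.
    have := vars_prefix (edge_var Hl); case=> s0 h; exfalso; exact: (pickle_neq_ext h).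
  rewrite /Y size_flatten.
  apply: (@leq_trans (size (enum Col) * (r.+1 * (delta_N N * capacity N)))).
    have := @size_flatten_le _ _ (fun c => [seq yv q c k | k <- iota 0 (size (kept c v r.+1))]) (enum Col) (r.+1 * (delta_N N * capacity N)).
    rewrite size_flatten; apply => c _; rewrite size_map size_iota; exact: kept_size.
  by rewrite -cardE /FF; apply: eq_leq; rewrite [(r.+1 * _)%N]mulnC !mulnA.
set T' := flatten (map (succs (pickle (rcons q (c0, k0) ++ s'))) (body_of r (rcons q (c0, k0)) (nth 0%N (kept c0 v r.+1) k0))).
apply: (@leq_trans (size (undup T'))).
  apply: uniq_leq_size; first exact: undup_uniq.
  move=> y; rewrite !mem_undup => /targetsP [c] /edge_lits [[h _]|[r' [c1 [k1 [Er [Hk Hl]]]]]].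
    by exfalso; apply: (@pickle_neq_ext' q (c0, k0) s'); rewrite h.
  case: Er => Er; subst r'.
  have := vars_prefix (edge_var Hl); case=> s0 h.
  rewrite -cat_rcons in h; case: (rcons_cat_inj h) => [[E1 E2] E3]; subst c1 k1 s0.
  by rewrite /T'; apply/targetsP; exists c; rewrite cat_rcons.
rewrite [size _]/= subSS; apply: IH; exact: ltnW.
Qed.

Lemma fanout_nopickle r q v z : (forall s, z <> pickle (q ++ s)) -> fanout (body_of r q v) z = 0%N.
Proof.
move=> Hz; rewrite /fanout.
case E: (undup (flatten (map (succs z) (body_of r q v)))) => [//|y ys].
have : y \in undup (flatten (map (succs z) (body_of r q v))) by rewrite E inE eqxx.
rewrite mem_undup => /targetsP [c] /edge_var /vars_prefix [s /esym h].
by exfalso; apply: (Hz s); rewrite h.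
Qed.

Lemma chain_bound a z n : chain (body_of (LL N) [::] a) z n ->
  n = 0%N \/ exists s : seq (Col * nat), z = pickle s /\ (n <= size s <= LL N)%N.
Proof.
elim => [z0|z0 w n0 c Hch IHc Hl]; first by left.
right; case: (edge_form Hl) => s [k' [Ew Ez Hs]].
exists (rcons s (c, k')); split; first by rewrite Ez.
rewrite size_rcons Hs andbT ltnS.
case: IHc => [->//|[s'' [Ew' /andP [h1 _]]]].
by move: Ew'; rewrite Ew cat0s => /pickle_inj' ->.
Qed.

Lemma root_df a : dftreelike (LL N) FF (pickle ([::] : seq (Col * nat))) (body_of (LL N) [::] a).
Proof.
split; first exact: tl_body.
move=> z n Hc; case: (chain_bound Hc) => [->|[s [-> /andP [h1 h2]]]].
  split => //; case: (classic (exists s : seq (Col * nat), z = pickle s)) => [[s ->]|hn].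
    have := @fanout_bound (LL N) [::] a s (leqnn (LL N)); rewrite cat0s => h; apply: (leq_trans h).
    by rewrite subn0 leq_mul2l leq_subr orbT.
  by rewrite fanout_nopickle // => s Es; apply: hn; exists s.
split; first exact: (leq_trans h1 h2).
have := @fanout_bound (LL N) [::] a s (leqnn (LL N)); rewrite cat0s => h; apply: (leq_trans h).
by rewrite leq_mul2l leq_sub2l ?orbT.
Qed.

Fixpoint walk (v r : nat) (s : seq (Col * nat)) : nat :=
  match s with
  | [::] => v
  | (c, k) :: s' => walk (nth 0%N (kept c v r) k) r.-1 s'
  end.

Lemma kept_VD c v r k : (k < size (kept c v r))%N -> nth 0%N (kept c v r) k \in VD D.
Proof. by move=> h; move: (kept_nbrs (mem_nth 0%N h)); rewrite mem_nbrs => /andP []. Qed.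

Lemma kept_FE c v r k : (k < size (kept c v r))%N -> FE delta c v (nth 0%N (kept c v r) k) \in D.
Proof. by move=> h; move: (kept_nbrs (mem_nth 0%N h)); rewrite mem_nbrs => /andP []. Qed.

Lemma body_sat r q v (nu : nat -> nat) : v \in VD D ->
  (forall s, nu (pickle (q ++ s)) = walk v r s) ->
  (forall l, List.In l (body_of r q v) -> lit_sat D nu l) /\
  (forall z, z \in vars (body_of r q v) -> nu z \in VD D).
Proof.
elim: r q v => [|r IH] q v vV Hnu.
  have Hq : nu (pickle q) = v by rewrite -[q]cats0 Hnu.
  split.
    move=> l /body_cases [[j [Hj ->]]|[[r' [_ [_ [//]]]]|[r' [_ [_ [_ [//]]]]]]].
    by rewrite /= Hq.
  move=> z /mem_vars [l [/body_cases [[j [Hj ->]]|[[r' [_ [_ [//]]]]|[r' [_ [_ [_ [//]]]]]]]]].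
  by rewrite /= inE => /eqP ->; rewrite Hq.
have Hq : nu (pickle q) = v by rewrite -[q]cats0 Hnu.
have Hy : forall c k, nu (yv q c k) = nth 0%N (kept c v r.+1) k.
  by move=> c k; rewrite /yv -cats1 Hnu.
have HIH : forall c k, (k < size (kept c v r.+1))%N ->
  (forall l, List.In l (body_of r (rcons q (c, k)) (nth 0%N (kept c v r.+1) k)) -> lit_sat D nu l) /\
  (forall z, z \in vars (body_of r (rcons q (c, k)) (nth 0%N (kept c v r.+1) k)) -> nu z \in VD D).
  move=> c k Hk; apply: IH; first exact: kept_VD.
  by move=> s; rewrite cat_rcons Hnu.
have Hlit : forall l, List.In l (body_of r.+1 q v) -> lit_sat D nu l.
  move=> l /body_cases [[j [Hj ->]]|[[r' [c [k [Er [Hk [->|Hl]]]]]]|[r' [c [k1 [k2 [Er [Hk ->]]]]]]]].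
  - by rewrite /= Hq.
  - by rewrite /= Hq Hy; apply: kept_FE.
  - by case: Er => Er; subst r'; apply: (proj1 (HIH c k Hk)).
  - rewrite /= !Hy => /eqP; case/andP: Hk => h1 h2.
    by rewrite nth_uniq ?kept_uniq ?(ltn_trans h1 h2) // (ltn_eqF h1).
split => // z /mem_vars [l [Hl Hz]].
move: Hz; case: (body_cases Hl) => [[j [Hj ->]]|[[r' [c [k [Er [Hk [->|Hl']]]]]]|[r' [c [k1 [k2 [Er [Hk ->]]]]]]]].
- by rewrite /= inE => /eqP ->; rewrite Hq.
- rewrite /= !inE => /orP [/eqP ->|/eqP ->]; first by rewrite Hq.
  by rewrite Hy; apply: kept_VD.
- move=> Hz; case: Er => Er; subst r'; apply: (proj2 (HIH c k Hk)).
  by apply/mem_vars; exists l.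
- case/andP: Hk => h1 h2.
  rewrite /= !inE => /orP [/eqP ->|/eqP ->]; rewrite Hy; apply: kept_VD => //.
  exact: ltn_trans h1 h2.
Qed.

Lemma glab01' (D' : dataset Col delta) v j : glab (enc R D') v j = 0 \/ glab (enc R D') v j = 1.
Proof. rewrite /=; case: insub => [i|]; last by left. by case: ifP; [right|left]. Qed.

Lemma hom (D' : dataset Col delta) (nu' : nat -> nat) l : forall r q v,
  (r <= LL N)%N ->
  (forall lt, List.In lt (body_of r q v) -> lit_sat D' nu' lt) ->
  (forall z, z \in vars (body_of r q v) -> nu' z \in terms D') ->
  (l <= r)%N -> forall j, (j < dim N l)%N ->
  tv l v r j <= lab N (enc R D') l (nu' (pickle q)) j.
Proof.
have [[_ Hd0 _] _] := HN.
elim: l => [|l IH] r q v HrL Hsat Hvars Hlr j Hj.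
  change (glab (GD R D) v j <= glab (enc R D') (nu' (pickle q)) j).
  rewrite /GD /=; move: Hj; rewrite Hd0 => Hj.
  case: insubP => [i _ Ei|]; last by rewrite Hj.
  case: ifP => HF; last by case: ifP.
  by have := Hsat _ (body_unary_in r q HF); rewrite /= => ->.
case: r HrL Hsat Hvars Hlr => [//|r] HrL Hsat Hvars Hlr.
have Hl1 : (1 <= l.+1 <= LL N)%N by rewrite /= (leq_trans Hlr HrL).
change (sigma N (Val N l.+1 j (tv l v r.+1) (fun c => [seq tv l u r | u <- kept c v r.+1])) <=
        sigma N (Val N l.+1 j (lab N (enc R D') l (nu' (pickle q)))
           (fun c => [seq lab N (enc R D') l u | u <- terms D' & FE delta c (nu' (pickle q)) u \in D']))).
apply: (sig_mono HN); apply: (Val_mono HN) => // [j' Hj'|c j' Hj'].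
  exact: (IH r.+1 q v HrL Hsat Hvars (ltnW Hlr) j' Hj').
rewrite -!map_comp.
set K := kept c v r.+1.
have -> : [seq ((fun y => y j') \o (fun u => tv l u r)) u | u <- K] =
          [seq tv l (nth 0%N K k) r j' | k <- iota 0 (size K)].
  by rewrite -{1}(mkseq_nth 0%N K) /mkseq -map_comp.
have Hch : forall k, (k < size K)%N ->
    (forall lt, List.In lt (body_of r (rcons q (c, k)) (nth 0%N K k)) -> lit_sat D' nu' lt) /\
    (forall z, z \in vars (body_of r (rcons q (c, k)) (nth 0%N K k)) -> nu' z \in terms D').
  move=> k Hk; split; first by move=> lt Hlt; apply: Hsat; apply: (body_child_in Hk).
  move=> z /mem_vars [lt [Hlt Hz]]; apply: Hvars; apply/mem_vars; exists lt; split => //.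
  exact: (body_child_in Hk).
apply: (@maxsum_dom R _ _ (iota 0 (size K)) [seq u <- terms D' | FE delta c (nu' (pickle q)) u \in D']
   (fun k => tv l (nth 0%N K k) r j') (fun k => nu' (yv q c k)) (fun u => lab N (enc R D') l u j')).
- exact: iota_uniq.
- exact/filter_uniq/undup_uniq.
- move=> k1 k2; rewrite !mem_iota /= !add0n => Hk1 Hk2 E.
  case: (ltngtP k1 k2) => // h; exfalso.
    have Hin : List.In (LNeq Col delta (Var (yv q c k1)) (Var (yv q c k2))) (body_of r.+1 q v).
      by apply: body_neq_in; rewrite h Hk2.
    by have := Hsat _ Hin; rewrite /= E.
  have Hin : List.In (LNeq Col delta (Var (yv q c k2)) (Var (yv q c k1))) (body_of r.+1 q v).
    by apply: body_neq_in; rewrite h Hk1.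
  by have := Hsat _ Hin; rewrite /= E.
- move=> k; rewrite mem_iota /= add0n => Hk; rewrite mem_filter.
  have He := @body_edge_in r q v c k Hk; rewrite (Hsat _ He) /=.
  apply: Hvars; apply/mem_vars; eexists; split; first exact: He.
  by rewrite /= !inE eqxx orbT.
- move=> k; rewrite mem_iota /= add0n => Hk.
  case: (Hch k Hk) => h1 h2; apply: (IH r) => //; exact: ltnW.
- by move=> y _; apply: orig_ge0.
- by move=> k _; apply: tv_ge0.
Qed.

End TB.


Theorem theorem4 (R : realType) (Col : finType) (delta : nat)
  (N : mgnn R Col) :
  monotonic_maxsum N delta ->
  forall (D : dataset Col delta) (f : fact Col delta),
    T_N N D f <-> ((is_binary f && (f \in D)) \/ T_PiN N D f).
Proof.
move=> HN D f; case: f => [c a b|i a] /=.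
  split; first by left.
  case=> // [[r [[x [i [Hh _]]] _ [nu [_ [_ Hf]]]]]].
  by move: Hf; rewrite Hh.
split; last first.
  case=> // [[r [_ Hcap HT]]]; exact: (Hcap D _ HT).
case=> aV Hcls; right.
have [[_ _ HdL] _] := HN.
set body := body_of N D (LL N) [::] a.
set root := pickle ([::] : seq (Col * nat)).
exists (Rule body (AU Col i (Var root))); split.
- exists root, i; split => //; exact: (root_df N D a).
- move=> D' f' [nu' [Hv [Hs ->]]] /=.
  have Hroot : nu' root \in terms D'.
    by apply: Hv; rewrite /rule_vars mem_cat /= inE eqxx orbT.
  split => //.
  have Hi : (i < dim N (LL N))%N by rewrite /LL HdL.
  have Ht : thr N <= tv N D (LL N) a (LL N) i.
    case: (inv_top HN aV (leqnn _) (leqnn _) Hi) => h //.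
    exact: (le_trans Hcls h).
  apply: (le_trans Ht); rewrite /cls.
  apply: (hom HN (D' := D') (nu' := nu') (leqnn _)) => //.
  by move=> z hz; apply: Hv; rewrite /rule_vars mem_cat hz.
- pose nu := fun z => if unpickle z is Some s then walk N D a (LL N) s else 0%N.
  have Hnu : forall s, nu (pickle ([::] ++ s)) = walk N D a (LL N) s by move=> s; rewrite /nu pickleK.
  case: (body_sat aV Hnu) => Hsat Hvars.
  exists nu; split => //.
    move=> z; rewrite /rule_vars mem_cat => /orP [/Hvars //|].
    by rewrite /= inE => /eqP ->; rewrite /root -[[::]]cat0s Hnu.
Qed.
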